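(* $(S,s)$ is the final coalgebra for $F=M\otimes-$ on $\mathbf{Met_3}^{C}$: for every coalgebra $(X,e\colon X\to M\otimes X)$ in $\mathbf{Met_3}^{C}$ there is a unique morphism $f\colon X\to S$ in $\mathbf{Met_3}^{C}$ with $s\circ f=(M\otimes f)\circ e$.
   Context: A tripointed metric space is a set with three distinct points $T,L,R$ and a metric bounded by $1$ in which $T,L,R$ have pairwise distance $1$. $\mathbf{Met_3}^{C}$: tripointed metric spaces with continuous maps preserving $T,L,R$. Let $M=\{a,b,c\}$. For a tripointed metric space $X$, $M\times X$ has metric $d((m,x),(n,y))=\tfrac12d(x,y)$ if $m=n$ and $1$ otherwise; $M\otimes X$ is the quotient metric space by the equivalence relation generated by $(b,T)\sim(a,L)$, $(a,R)\sim(c,T)$, $(c,L)\sim(b,R)$, with elements $m\otimes x$ and distinguished points $a\otimes T,b\otimes L,c\otimes R$; $F=M\otimes-$ with $(M\otimes f)(m\otimes x)=m\otimes f(x)$. A coalgebra is $(X,e\colon X\to FX)$. Let $I=\{T,L,R\}$ with the discrete metric and $!\colon I\to FI$ be $T\mapsto a\otimes T$, $L\mapsto b\otimes L$, $R\mapsto c\otimes R$; the maps $F^n!$ are isometric embeddings and $G$ is the metric union (colimit) of $I\to FI\to F^2I\to\cdots$, i.e. expressions $m_0\otimes\cdots\otimes m_{n-1}\otimes z$ ($z\in\{T,L,R\}$) modulo the induced identifications, with $g\colon M\otimes G\to G$, $g(m\otimes w)=m\otimes w$, a bijective isometry ($(G,g)$ is the initial $F$-algebra in the category of tripointed metric spaces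 with short maps). $S$ is the Cauchy completion of $G$, tripointed by $T,L,R$; the completion of $g$ yields a bijective isometry $\psi\colon M\otimes S\to S$, and $s=\psi^{-1}\colon S\to M\otimes S$. *)

(* Defs.v *)
From Stdlib Require Import Reals Lra List ClassicalEpsilon Relations Eqdep_dec.
Open Scope R_scope.

Definition is_inf (E : R -> Prop) (l : R) : Prop :=
  (forall x, E x -> l <= x) /\ (forall l', (forall x, E x -> l' <= x) -> l' <= l).

(* infimum of E (junk value 0 if it does not exist) *)
Definition Rinf (E : R -> Prop) : R :=
  match excluded_middle_informative (exists l, is_inf E l) with
  | left h => proj1_sig (constructive_indefinite_description _ h)
  | right _ => 0
  end.

(* limit of a real sequence (junk value 0 if it does not converge) *)
Definition seq_lim (u : nat -> R) : R :=
  match excluded_middle_informative (exists l, Un_cv u l) with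
  | left h => proj1_sig (constructive_indefinite_description _ h)
  | right _ => 0
  end.

Section MetricIdentification.
Variables (A : Type) (dom : A -> Prop) (d : A -> A -> R).

Definition mid : Type := {P : A -> Prop | exists x, dom x /\ P = (fun y => d x y = 0)}.

Definition mrep (P : mid) : A :=
  proj1_sig (constructive_indefinite_description _ (proj2_sig P)).

Definition mcls (x : A) (h : dom x) : mid :=
  exist _ (fun y => d x y = 0) (ex_intro _ x (conj h eq_refl)).

Definition mcls_or (x : A) (z : mid) : mid :=
  match excluded_middle_informative (dom x) with
  | left h => mcls x h
  | right _ => z
  end.

Definition mdist (P Q : mid) : R := d (mrep P) (mrep Q).
End MetricIdentification.
Arguments mid {A}.
Arguments mcls {A}.
Arguments mcls_or {A}.
Arguments mrep {A dom d}.
Arguments mdist {A dom d}.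

Definition clsT {A : Type} (d : A -> A -> R) (x : A) : mid (fun _ => True) d :=
  mcls (fun _ => True) d x I.

Record tms := Tms { car :> Type; dist : car -> car -> R; pT : car; pL : car; pR : car }.
Arguments dist {t}.
Arguments pT t : clear implicits.
Arguments pL t : clear implicits.
Arguments pR t : clear implicits.

Definition is_metric {X : Type} (d : X -> X -> R) : Prop :=
  (forall x y, 0 <= d x y) /\
  (forall x y, d x y = 0 <-> x = y) /\
  (forall x y, d x y = d y x) /\
  (forall x y z, d x z <= d x y + d y z).

Definition is_tms (X : tms) : Prop :=
  is_metric (@dist X) /\ (forall x y : X, dist x y <= 1) /\
  pT X <> pL X /\ pT X <> pR X /\ pL X <> pR X /\
  dist (pT X) (pL X) = 1 /\ dist (pT X) (pR X) = 1 /\ dist (pL X) (pR X) = 1.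

Definition continuous_map (X Y : tms) (f : X -> Y) : Prop :=
  forall (x : X) (eps : R), 0 < eps ->
    exists delta, 0 < delta /\
      forall y : X, dist x y < delta -> dist (f x) (f y) < eps.

Definition tripointed (X Y : tms) (f : X -> Y) : Prop :=
  f (pT X) = pT Y /\ f (pL X) = pL Y /\ f (pR X) = pR Y.

Definition morph (X Y : tms) (f : X -> Y) : Prop :=
  continuous_map X Y f /\ tripointed X Y f.

Inductive Mlab := ma | mb | mc.
Definition Mlab_eq_dec (x y : Mlab) : {x = y} + {x <> y}.
Proof. decide equality. Defined.

Section Ften.
Variable X : tms.

Definition MX : Type := (Mlab * car X)%type.

Definition dMX (p q : MX) : R :=
  if Mlab_eq_dec (fst p) (fst q) then dist (snd p) (snd q) / 2 else 1.

Definition glue (p q : MX) : Prop :=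
  (p = (mb, pT X) /\ q = (ma, pL X)) \/
  (p = (ma, pR X) /\ q = (mc, pT X)) \/
  (p = (mc, pL X) /\ q = (mb, pR X)).

Definition glue_eq : MX -> MX -> Prop := clos_refl_sym_trans MX glue.

(* chain x ~ u1, v1 ~ u2, ..., vk ~ y with cost sum d(ui,vi) *)
Fixpoint chain (x y : MX) (l : list (MX * MX)) : Prop :=
  match l with
  | nil => glue_eq x y
  | (u, v) :: l' => glue_eq x u /\ chain v y l'
  end.

Fixpoint chain_cost (l : list (MX * MX)) : R :=
  match l with
  | nil => 0
  | (u, v) :: l' => dMX u v + chain_cost l'
  end.

Definition dq (x y : MX) : R :=
  Rinf (fun r => exists l, chain x y l /\ r = chain_cost l).

Definition Ften : tms :=
  Tms (mid (fun _ : MX => True) dq) mdist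
      (clsT dq (ma, pT X)) (clsT dq (mb, pL X)) (clsT dq (mc, pR X)).

Definition tens (m : Mlab) (x : X) : Ften := clsT dq (m, x).
End Ften.

Definition Fmap (X Y : tms) (f : X -> Y) (z : Ften X) : Ften Y :=
  tens Y (fst (mrep z)) (f (snd (mrep z))).

Inductive Tri := tT | tL | tR.
Definition Tri_eq_dec (x y : Tri) : {x = y} + {x <> y}.
Proof. decide equality. Defined.

Definition dI (x y : Tri) : R := if Tri_eq_dec x y then 0 else 1.
Definition Itms : tms := Tms Tri dI tT tL tR.

Definition bang (z : Itms) : Ften Itms :=
  match z with
  | tT => tens Itms ma tT
  | tL => tens Itms mb tL
  | tR => tens Itms mc tR
  end.

Fixpoint Fn (n : nat) : tms :=
  match n with O => Itms | S k => Ften (Fn k) end.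

Fixpoint emb (n : nat) : Fn n -> Fn (S n) :=
  match n return Fn n -> Fn (S n) with
  | O => bang
  | S k => Fmap (Fn k) (Fn (S k)) (emb k)
  end.

Fixpoint embUp (n k : nat) : Fn n -> Fn (k + n) :=
  match k return Fn n -> Fn (k + n) with
  | O => fun x => x
  | S j => fun x => emb (j + n) (embUp n j x)
  end.

Definition Graw : Type := {n : nat & car (Fn n)}.

(* union metric: compare at the common level n + m *)
Definition dGraw (p q : Graw) : R :=
  match p, q with
  | existT _ n x, existT _ m y =>
      dist (eq_rect _ (fun k => car (Fn k)) (embUp n m x) _ (Nat.add_comm m n))
           (embUp m n y)
  end.

Definition G : tms :=
  Tms (mid (fun _ : Graw => True) dGraw) mdist
      (clsT dGraw (existT _ 0%nat tT)) (clsT dGraw (existT _ 0%nat tL))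
      (clsT dGraw (existT _ 0%nat tR)).

Definition galg (z : Ften G) : G :=
  let m := fst (mrep z) in
  match mrep (snd (mrep z)) with
  | existT _ n x => clsT dGraw (existT (fun k => car (Fn k)) (S n) (tens (Fn n) m x))
  end.

Definition cauchy (u : nat -> G) : Prop :=
  forall eps, 0 < eps -> exists N, forall i j, (N <= i)%nat -> (N <= j)%nat ->
    dist (u i) (u j) < eps.

Definition dS (u v : nat -> G) : R := seq_lim (fun n => dist (u n) (v n)).

Lemma Rinf_nonneg (E : R -> Prop) : (forall x, E x -> 0 <= x) -> 0 <= Rinf E.
Proof.
  intros H; unfold Rinf.
  destruct (excluded_middle_informative _) as [h|_]; [|lra].
  destruct (constructive_indefinite_description _ h) as [l [H1 H2]]; simpl.
  apply H2; exact H.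
Qed.

Lemma Rinf_zero (E : R -> Prop) : E 0 -> (forall x, E x -> 0 <= x) -> Rinf E = 0.
Proof.
  intros H0 H; unfold Rinf.
  destruct (excluded_middle_informative _) as [h|n].
  - destruct (constructive_indefinite_description _ h) as [l [H1 H2]]; simpl.
    assert (l <= 0) by (apply H1; exact H0).
    assert (0 <= l) by (apply H2; exact H). lra.
  - exfalso; apply n; exists 0; split; [exact H|]. intros l' Hl; apply Hl; exact H0.
Qed.

Lemma Fn_nonneg (n : nat) : forall x y : Fn n, 0 <= dist x y.
Proof.
  induction n as [|n IH]; intros x y.
  - simpl; unfold dI; destruct (Tri_eq_dec x y); lra.
  - simpl; unfold mdist, dq. apply Rinf_nonneg.
    intros r [l [_ ->]]. induction l as [|[u v] l IHl]; simpl; [lra|].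
    assert (0 <= dMX (Fn n) u v).
    { unfold dMX; destruct (Mlab_eq_dec _ _); [|lra].
      specialize (IH (snd u) (snd v)); lra. }
    lra.
Qed.

Lemma Fn_self (n : nat) : forall x : Fn n, dist x x = 0.
Proof.
  destruct n as [|n]; intros x.
  - simpl; unfold dI; destruct (Tri_eq_dec x x); congruence.
  - simpl; unfold mdist, dq. apply Rinf_zero.
    + exists nil; split; [apply rst_refl | reflexivity].
    + intros r [l [_ ->]]. induction l as [|[u v] l IHl]; simpl; [lra|].
      assert (0 <= dMX (Fn n) u v).
      { unfold dMX; destruct (Mlab_eq_dec _ _); [|lra].
        pose proof (Fn_nonneg n (snd u) (snd v)); lra. }
      lra.
Qed.

Lemma G_self (x : G) : dist x x = 0.
Proof.
  simpl; unfold mdist. destruct (mrep x) as [n y]; simpl.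
  generalize (Nat.add_comm n n); intro e.
  rewrite (UIP_refl_nat _ e); simpl. apply Fn_self.
Qed.

Lemma const_cauchy (x : G) : cauchy (fun _ => x).
Proof. intros eps H; exists 0%nat; intros; rewrite G_self; exact H. Qed.

Definition S : tms :=
  Tms (mid cauchy dS) mdist
      (mcls cauchy dS _ (const_cauchy (pT G)))
      (mcls cauchy dS _ (const_cauchy (pL G)))
      (mcls cauchy dS _ (const_cauchy (pR G))).

Definition psi (z : Ften S) : S :=
  let m := fst (mrep z) in
  let u := mrep (snd (mrep z)) in
  mcls_or cauchy dS (fun k => galg (tens G m (u k))) (pT S).

Definition s (y : S) : Ften S :=
  match excluded_middle_informative (exists z, psi z = y) with
  | left h => proj1_sig (constructive_indefinite_description _ h)
  | right _ => pT (Ften S)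
  end.

(* Main.v *)
From Stdlib Require Import Reals Lra List ClassicalEpsilon Relations Eqdep_dec
  FunctionalExtensionality ProofIrrelevance PropExtensionality Classical Arith Lia.
Require Import Defs.
Open Scope R_scope.

Section MidGen.
Variables (A : Type) (dom : A -> Prop) (d : A -> A -> R).
Hypothesis dself : forall x, dom x -> d x x = 0.
Hypothesis dsym : forall x y, dom x -> dom y -> d x y = d y x.
Hypothesis dcls : forall x x', dom x -> dom x' -> d x x' = 0 -> forall y, d x y = d x' y.

Lemma mrep_spec (P : mid dom d) :
  dom (mrep P) /\ proj1_sig P = (fun y => d (mrep P) y = 0).
Proof.
  unfold mrep. destruct (constructive_indefinite_description _ _) as [x [h e]]; simpl.
  split; auto.
Qed.

Lemma mid_eq (P Q : mid dom d) : proj1_sig P = proj1_sig Q -> P = Q.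
Proof.
  destruct P as [p hp], Q as [q hq]; simpl; intros ->. f_equal. apply proof_irrelevance.
Qed.

Lemma mrep_dom (P : mid dom d) : dom (mrep P).
Proof. apply mrep_spec. Qed.

Lemma mrep_mcls x (h : dom x) : d x (mrep (mcls dom d x h)) = 0.
Proof.
  destruct (mrep_spec (mcls dom d x h)) as [h1 e]. simpl in e.
  assert (H := f_equal (fun P => P (mrep (mcls dom d x h))) e). simpl in H.
  rewrite H. apply dself; auto.
Qed.

Lemma mdist_mcls x y (hx : dom x) (hy : dom y) :
  mdist (mcls dom d x hx) (mcls dom d y hy) = d x y.
Proof.
  unfold mdist.
  pose proof (mrep_mcls x hx) as E1. pose proof (mrep_mcls y hy) as E2.
  set (rx := mrep (mcls dom d x hx)) in *. set (ry := mrep (mcls dom d y hy)) in *.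
  assert (Drx : dom rx) by apply mrep_dom. assert (Dry : dom ry) by apply mrep_dom.
  rewrite <- (dcls x rx hx Drx E1 ry).
  rewrite (dsym x ry hx Dry). rewrite <- (dcls y ry hy Dry E2 x).
  apply dsym; auto.
Qed.

Lemma mcls_mrep (P : mid dom d) (h : dom (mrep P)) : P = mcls dom d (mrep P) h.
Proof. apply mid_eq. simpl. apply mrep_spec. Qed.

Lemma mcls_eq x y (hx : dom x) (hy : dom y) : d x y = 0 -> mcls dom d x hx = mcls dom d y hy.
Proof.
  intros H. apply mid_eq; simpl. apply functional_extensionality; intros z.
  apply propositional_extensionality. rewrite (dcls x y hx hy H z). tauto.
Qed.

Lemma mcls_eq_inv x y (hx : dom x) (hy : dom y) : mcls dom d x hx = mcls dom d y hy -> d x y = 0.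
Proof.
  intros H. rewrite <- (mdist_mcls x y hx hy). rewrite H. rewrite mdist_mcls. apply dself; auto.
Qed.

Lemma mdist_zero (P Q : mid dom d) : mdist P Q = 0 -> P = Q.
Proof.
  intros H. rewrite (mcls_mrep P (mrep_dom P)), (mcls_mrep Q (mrep_dom Q)).
  apply mcls_eq. exact H.
Qed.

Lemma mdist_self (P : mid dom d) : mdist P P = 0.
Proof. unfold mdist. apply dself, mrep_dom. Qed.

Lemma mdist_sym (P Q : mid dom d) : mdist P Q = mdist Q P.
Proof. unfold mdist. apply dsym; apply mrep_dom. Qed.
End MidGen.

Lemma Rinf_eq (E : R -> Prop) l : is_inf E l -> Rinf E = l.
Proof.
  intros H. unfold Rinf. destruct (excluded_middle_informative _) as [h|n].
  - destruct (constructive_indefinite_description _ h) as [l' [H1 H2]]; simpl.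
    destruct H as [H3 H4]. apply Rle_antisym; auto.
  - exfalso; apply n; eauto.
Qed.

Definition min3 (f : Mlab -> R) : R := Rmin (f ma) (Rmin (f mb) (f mc)).
Lemma min3_le f k : min3 f <= f k.
Proof.
  unfold min3. destruct k.
  - apply Rmin_l.
  - eapply Rle_trans; [apply Rmin_r|apply Rmin_l].
  - eapply Rle_trans; [apply Rmin_r|apply Rmin_r].
Qed.
Lemma min3_att f : exists k, min3 f = f k.
Proof.
  unfold min3. unfold Rmin. destruct (Rle_dec (f mb) (f mc)); destruct (Rle_dec _ _); eauto.
Qed.
Lemma min3_glb f r : (forall k, r <= f k) -> r <= min3 f.
Proof. intros H. destruct (min3_att f) as [k ->]. auto. Qed.

Definition corner (X : tms) (m k : Mlab) : car X :=
  match m, k with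
  | ma, ma => pT X | ma, mb => pR X | ma, mc => pL X
  | mb, mb => pL X | mb, ma => pR X | mb, mc => pT X
  | mc, mc => pR X | mc, ma => pL X | mc, mb => pT X
  end.

Definition third (k k' : Mlab) : Mlab :=
  match k, k' with
  | ma, mb | mb, ma => mc
  | ma, mc | mc, ma => mb
  | mb, mc | mc, mb => ma
  | _, _ => k
  end.

Lemma third_spec k k' : k <> k' -> third k k' <> k /\ third k k' <> k'.
Proof. destruct k, k'; simpl; intuition discriminate. Qed.

Lemma third_uniq k k' j : k <> k' -> j <> k -> j <> k' -> j = third k k'.
Proof. destruct k, k', j; simpl; intuition congruence. Qed.

Lemma eqdec_refl (m : Mlab) : exists e, Mlab_eq_dec m m = left e.
Proof. destruct (Mlab_eq_dec m m); [eauto|congruence]. Qed.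

Definition hterm (m k : Mlab) (dk : R) : R := if Mlab_eq_dec m k then 1 else dk / 2.
Definition dl (k k' : Mlab) : R := if Mlab_eq_dec k k' then 0 else / 2.
Definition term (m n : Mlab) (dx dy : Mlab -> R) (k k' : Mlab) : R :=
  hterm m k (dx k) + dl k k' + hterm n k' (dy k').
Definition viaF m n dx dy := min3 (fun k => min3 (fun k' => term m n dx dy k k')).
Definition direct (m n : Mlab) (dxy : R) : R := if Mlab_eq_dec m n then dxy / 2 else 1.
Definition Dform m n dxy dx dy := Rmin (direct m n dxy) (viaF m n dx dy).

Lemma viaF_le m n dx dy k k' : viaF m n dx dy <= term m n dx dy k k'.
Proof.
  unfold viaF. eapply Rle_trans; [apply (min3_le _ k)|]. apply (min3_le _ k').
Qed.
Lemma viaF_att m n dx dy : exists k k', viaF m n dx dy = term m n dx dy k k'.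
Proof.
  unfold viaF. destruct (min3_att (fun k => min3 (fun k' => term m n dx dy k k'))) as [k ->].
  destruct (min3_att (fun k' => term m n dx dy k k')) as [k' ->]. eauto.
Qed.
Lemma Dform_le_direct m n dxy dx dy : Dform m n dxy dx dy <= direct m n dxy.
Proof. apply Rmin_l. Qed.
Lemma Dform_le_term m n dxy dx dy k k' : Dform m n dxy dx dy <= term m n dx dy k k'.
Proof. eapply Rle_trans; [apply Rmin_r|apply viaF_le]. Qed.
Lemma Dform_att m n dxy dx dy :
  Dform m n dxy dx dy = direct m n dxy \/
  exists k k', Dform m n dxy dx dy = term m n dx dy k k'.
Proof.
  unfold Dform, Rmin. destruct (Rle_dec _ _); [left; auto|right; apply viaF_att].
Qed.
Lemma Dform_glb m n dxy dx dy r :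
  r <= direct m n dxy -> (forall k k', r <= term m n dx dy k k') -> r <= Dform m n dxy dx dy.
Proof.
  intros H1 H2. destruct (Dform_att m n dxy dx dy) as [->|[k [k' ->]]]; auto.
Qed.

Record pms (X : tms) : Prop := {
  pm_nn : forall x y : X, 0 <= dist x y;
  pm_self : forall x : X, dist x x = 0;
  pm_sym : forall x y : X, dist x y = dist y x;
  pm_tri : forall x y z : X, dist x z <= dist x y + dist y z;
  pm_le1 : forall x y : X, dist x y <= 1;
  pm_TL : dist (pT X) (pL X) = 1;
  pm_TR : dist (pT X) (pR X) = 1;
  pm_LR : dist (pL X) (pR X) = 1 }.

Definition D (X : tms) (p q : MX X) : R :=
  Dform (fst p) (fst q) (dist (snd p) (snd q))
    (fun k => dist (snd p) (corner X (fst p) k))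
    (fun k => dist (snd q) (corner X (fst q) k)).

Section DProps.
Variable X : tms.
Hypothesis HX : pms X.

Lemma corner_dist m k k' : k <> k' -> dist (corner X m k) (corner X m k') = 1.
Proof.
  destruct HX. intros H.
  destruct m, k, k'; simpl; try congruence; try rewrite pm_sym0; auto.
Qed.

Lemma corner_dist0 m k : dist (corner X m k) (corner X m k) = 0.
Proof. apply (pm_self _ HX). Qed.

Lemma hterm_nn m k d : 0 <= d -> 0 <= hterm m k d.
Proof. unfold hterm; destruct (Mlab_eq_dec m k); lra. Qed.

Lemma dl_nn k k' : 0 <= dl k k'.
Proof. unfold dl; destruct (Mlab_eq_dec k k'); lra. Qed.

Lemma dl_sym k k' : dl k k' = dl k' k.
Proof. unfold dl; destruct (Mlab_eq_dec k k'), (Mlab_eq_dec k' k); congruence || lra. Qed.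

Lemma dl_tri k1 k2 k3 : dl k1 k3 <= dl k1 k2 + dl k2 k3.
Proof.
  unfold dl; destruct (Mlab_eq_dec k1 k3), (Mlab_eq_dec k1 k2), (Mlab_eq_dec k2 k3);
    subst; try congruence; lra.
Qed.

Lemma dl_le_h (m k1 k2 : Mlab) (y : X) :
  dl k1 k2 <= hterm m k1 (dist y (corner X m k1)) + hterm m k2 (dist y (corner X m k2)).
Proof.
  destruct HX.
  unfold dl, hterm.
  destruct (Mlab_eq_dec k1 k2).
  - destruct (Mlab_eq_dec m k1), (Mlab_eq_dec m k2);
      pose proof (pm_nn0 y (corner X m k1)); pose proof (pm_nn0 y (corner X m k2)); lra.
  - destruct (Mlab_eq_dec m k1), (Mlab_eq_dec m k2);
      pose proof (pm_nn0 y (corner X m k1)); pose proof (pm_nn0 y (corner X m k2)); try lra.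
    pose proof (corner_dist m k1 k2 n).
    pose proof (pm_tri0 (corner X m k1) y (corner X m k2)) as T1.
    rewrite (pm_sym0 (corner X m k1) y) in T1. lra.
Qed.

Lemma term_nn (p q : MX X) k k' :
  0 <= term (fst p) (fst q) (fun k => dist (snd p) (corner X (fst p) k))
            (fun k => dist (snd q) (corner X (fst q) k)) k k'.
Proof.
  unfold term. pose proof (dl_nn k k').
  pose proof (hterm_nn (fst p) k _ (pm_nn _ HX (snd p) (corner X (fst p) k))).
  pose proof (hterm_nn (fst q) k' _ (pm_nn _ HX (snd q) (corner X (fst q) k'))). lra.
Qed.

Lemma direct_nn (p q : MX X) : 0 <= direct (fst p) (fst q) (dist (snd p) (snd q)).
Proof.
  unfold direct. destruct (Mlab_eq_dec _ _); [pose proof (pm_nn _ HX (snd p) (snd q))|]; lra.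
Qed.

Lemma D_nn p q : 0 <= D X p q.
Proof.
  unfold D. apply Dform_glb; [apply direct_nn|]. intros; apply term_nn.
Qed.

Lemma D_le_dMX p q : D X p q <= dMX X p q.
Proof. unfold D. apply Dform_le_direct. Qed.

Lemma D_self p : D X p p = 0.
Proof.
  apply Rle_antisym; [|apply D_nn].
  eapply Rle_trans; [apply D_le_dMX|]. unfold dMX.
  destruct (Mlab_eq_dec _ _); [|congruence]. rewrite (pm_self _ HX). lra.
Qed.

Lemma D_le_junction p q k : fst p <> k -> fst q <> k ->
  D X p q <= dist (snd p) (corner X (fst p) k) / 2 + dist (snd q) (corner X (fst q) k) / 2.
Proof.
  intros H1 H2. unfold D. eapply Rle_trans; [apply (Dform_le_term _ _ _ _ _ k k)|].
  unfold term, hterm, dl.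
  destruct (Mlab_eq_dec (fst p) k); [congruence|].
  destruct (Mlab_eq_dec k k); [|congruence].
  destruct (Mlab_eq_dec (fst q) k); [congruence|]. lra.
Qed.

Lemma D_le1 p q : D X p q <= 1.
Proof.
  destruct p as [m x], q as [n y].
  destruct (Mlab_eq_dec m n).
  - subst. eapply Rle_trans; [apply D_le_dMX|]. unfold dMX; simpl.
    destruct (Mlab_eq_dec n n); [|congruence]. pose proof (pm_le1 _ HX x y).
    pose proof (pm_nn _ HX x y). lra.
  - eapply Rle_trans; [apply D_le_dMX|]. unfold dMX; simpl.
    destruct (Mlab_eq_dec m n); [congruence|lra].
Qed.

Lemma term_sym (p q : MX X) k k' :
  term (fst p) (fst q) (fun k => dist (snd p) (corner X (fst p) k))
            (fun k => dist (snd q) (corner X (fst q) k)) k k' =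
  term (fst q) (fst p) (fun k => dist (snd q) (corner X (fst q) k))
            (fun k => dist (snd p) (corner X (fst p) k)) k' k.
Proof. unfold term. rewrite (dl_sym k k'). lra. Qed.

Lemma D_sym_le p q : D X p q <= D X q p.
Proof.
  unfold D at 2. destruct (Dform_att (fst q) (fst p) (dist (snd q) (snd p))
    (fun k => dist (snd q) (corner X (fst q) k)) (fun k => dist (snd p) (corner X (fst p) k)))
    as [E|[k [k' E]]]; rewrite E.
  - unfold D. eapply Rle_trans; [apply Dform_le_direct|]. unfold direct.
    rewrite (pm_sym _ HX (snd p) (snd q)).
    destruct (Mlab_eq_dec (fst p) (fst q)), (Mlab_eq_dec (fst q) (fst p)); subst; try congruence; lra.
  - rewrite <- term_sym. unfold D. apply Dform_le_term.
Qed.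

Lemma D_sym p q : D X p q = D X q p.
Proof. apply Rle_antisym; apply D_sym_le. Qed.

Lemma D_att m n x y : D X (m,x) (n,y) = direct m n (dist x y) \/
  exists k k', D X (m,x) (n,y) = term m n (fun k => dist x (corner X m k))
     (fun k => dist y (corner X n k)) k k'.
Proof. unfold D; simpl. apply Dform_att. Qed.
Lemma D_le_term' m n x y k k' : D X (m,x) (n,y) <= term m n (fun k => dist x (corner X m k))
     (fun k => dist y (corner X n k)) k k'.
Proof. unfold D; simpl. apply Dform_le_term. Qed.
Lemma D_le_direct' m n x y : D X (m,x) (n,y) <= direct m n (dist x y).
Proof. unfold D; simpl. apply Dform_le_direct. Qed.

Lemma D_tri p q r : D X p r <= D X p q + D X q r.
Proof.
  destruct p as [m x], q as [n y], r as [o z].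
  pose proof (pm_nn _ HX) as NN. pose proof (pm_tri _ HX) as TRI.
  pose proof (D_nn (m,x) (n,y)). pose proof (D_nn (n,y) (o,z)).
  pose proof (D_le1 (m,x) (o,z)).
  destruct (D_att n o y z) as [E2|[k2 [k2' E2]]]; rewrite E2.
  - unfold direct. destruct (Mlab_eq_dec n o) as [eno|eno]; [|lra]. subst o.
    destruct (D_att m n x y) as [E1|[k1 [k1' E1]]]; rewrite E1.
    + unfold direct. destruct (Mlab_eq_dec m n) as [emn|emn]; [|pose proof (NN y z); lra].
      subst n. eapply Rle_trans; [apply D_le_direct'|]. unfold direct.
      destruct (Mlab_eq_dec m m); [|congruence]. pose proof (TRI x y z); lra.
    + eapply Rle_trans; [apply (D_le_term' _ _ _ _ k1 k1')|].
      unfold term. unfold hterm.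
      destruct (Mlab_eq_dec n k1'); pose proof (NN y z); [lra|].
      pose proof (TRI z y (corner X n k1')) as T1. rewrite (pm_sym _ HX z y) in T1. lra.
  - destruct (D_att m n x y) as [E1|[k1 [k1' E1]]]; rewrite E1.
    + unfold direct. destruct (Mlab_eq_dec m n) as [emn|emn];
        [|pose proof (term_nn (n,y) (o,z) k2 k2'); simpl in *; lra].
      subst n. eapply Rle_trans; [apply (D_le_term' _ _ _ _ k2 k2')|].
      unfold term, hterm.
      destruct (Mlab_eq_dec m k2); pose proof (NN x y); [lra|].
      pose proof (TRI x y (corner X m k2)). lra.
    + eapply Rle_trans; [apply (D_le_term' _ _ _ _ k1 k2')|].
      unfold term.
      pose proof (dl_le_h n k1' k2 y). pose proof (dl_tri k1 k1' k2).
      pose proof (dl_tri k1 k2 k2'). lra.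
Qed.

Lemma D_glue p q : glue X p q -> D X p q = 0.
Proof.
  intros H. apply Rle_antisym; [|apply D_nn].
  destruct H as [[-> ->]|[[-> ->]|[-> ->]]].
  - eapply Rle_trans; [apply (D_le_junction _ _ mc); simpl; discriminate|]. simpl.
    rewrite !(pm_self _ HX). lra.
  - eapply Rle_trans; [apply (D_le_junction _ _ mb); simpl; discriminate|]. simpl.
    rewrite !(pm_self _ HX). lra.
  - eapply Rle_trans; [apply (D_le_junction _ _ ma); simpl; discriminate|]. simpl.
    rewrite !(pm_self _ HX). lra.
Qed.

Lemma D_glue_eq p q : glue_eq X p q -> D X p q = 0.
Proof.
  induction 1.
  - apply D_glue; auto.
  - apply D_self.
  - rewrite D_sym; auto.
  - apply Rle_antisym; [|apply D_nn]. pose proof (D_tri x y z). lra.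
Qed.

Lemma D_chain p q l : chain X p q l -> D X p q <= chain_cost X l.
Proof.
  revert p. induction l as [|[u v] l IH]; intros p H; simpl in *.
  - rewrite D_glue_eq; auto. lra.
  - destruct H as [H1 H2]. pose proof (D_glue_eq _ _ H1). pose proof (IH _ H2).
    pose proof (D_le_dMX u v). pose proof (D_tri p u q). pose proof (D_tri u v q). lra.
Qed.

Lemma glue_junction m1 m2 k : m1 <> k -> m2 <> k ->
  glue_eq X (m1, corner X m1 k) (m2, corner X m2 k).
Proof.
  intros H1 H2. unfold glue_eq.
  destruct m1, m2, k; try congruence; try apply rst_refl;
  solve [ apply rst_step; unfold glue; intuition
        | apply rst_sym, rst_step; unfold glue; intuition ].
Qed.

Lemma dMX_same m x y : dMX X (m, x) (m, y) = dist x y / 2.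
Proof. unfold dMX; simpl. destruct (Mlab_eq_dec m m); congruence. Qed.

Lemma D_attained p q : exists l, chain X p q l /\ chain_cost X l = D X p q.
Proof.
  destruct p as [m x], q as [n y].
  assert (Hdir : exists l, chain X (m,x) (n,y) l /\ chain_cost X l = dMX X (m,x) (n,y)).
  { exists (((m,x),(n,y)) :: nil). simpl. split; [split; apply rst_refl|lra]. }
  assert (Hd : D X (m,x) (n,y) = dMX X (m,x) (n,y) \/ exists k k', m <> k /\ n <> k' /\
     D X (m,x) (n,y) = term m n (fun k => dist x (corner X m k))
     (fun k => dist y (corner X n k)) k k').
  { destruct (D_att m n x y) as [E|[k [k' E]]]; [left; exact E|].
    destruct (Mlab_eq_dec m k) as [e1|e1]; [|destruct (Mlab_eq_dec n k') as [e2|e2]].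
    - left. apply Rle_antisym; [apply D_le_dMX|].
      pose proof (D_le1 (m,x) (n,y)). rewrite E in *. unfold term, hterm in *.
      destruct (Mlab_eq_dec m k); [|congruence].
      pose proof (dl_nn k k'). pose proof (hterm_nn n k' _ (pm_nn _ HX y (corner X n k'))).
      unfold hterm in *. unfold dMX; simpl.
      destruct (Mlab_eq_dec m n); [pose proof (pm_le1 _ HX x y); lra|lra].
    - left. apply Rle_antisym; [apply D_le_dMX|]. rewrite E. unfold term, hterm.
      destruct (Mlab_eq_dec m k); [congruence|]. destruct (Mlab_eq_dec n k'); [|congruence].
      pose proof (dl_nn k k'). pose proof (pm_nn _ HX x (corner X m k)). unfold dMX; simpl.
      destruct (Mlab_eq_dec m n); [pose proof (pm_le1 _ HX x y); lra|lra].
    - right. exists k, k'. auto. }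
  destruct Hd as [E|[k [k' [e1 [e2 E]]]]]; rewrite E; [exact Hdir|].
  unfold term, hterm.
  destruct (Mlab_eq_dec m k) as [e1'|e1']; [congruence|].
  destruct (Mlab_eq_dec n k') as [e2'|e2']; [congruence|].
  destruct (Mlab_eq_dec k k') as [e3|e3].
  - subst k'. exists (((m,x),(m, corner X m k)) :: ((n, corner X n k), (n,y)) :: nil).
    simpl. split.
    + split; [apply rst_refl|]. split; [apply glue_junction; auto|apply rst_refl].
    + rewrite !dMX_same. unfold dl. destruct (Mlab_eq_dec k k); [|congruence].
      rewrite (pm_sym _ HX (corner X n k) y). lra.
  - set (j := third k k'). destruct (third_spec k k' e3) as [j1 j2].
    exists (((m,x),(m, corner X m k)) :: ((j, corner X j k), (j, corner X j k'))
            :: ((n, corner X n k'), (n,y)) :: nil).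
    simpl. split.
    + split; [apply rst_refl|]. split; [apply glue_junction; auto|].
      split; [apply glue_junction; auto|apply rst_refl].
    + rewrite !dMX_same. unfold dl. destruct (Mlab_eq_dec k k'); [congruence|].
      rewrite (corner_dist j k k' e3). rewrite (pm_sym _ HX (corner X n k') y). lra.
Qed.

Lemma dq_D p q : dq X p q = D X p q.
Proof.
  unfold dq. apply Rinf_eq. split.
  - intros r [l [H ->]]. apply D_chain; auto.
  - intros l' H. destruct (D_attained p q) as [l [H1 H2]]. apply H. exists l; auto.
Qed.

Lemma D_same m x y : D X (m,x) (m,y) = dist x y / 2.
Proof.
  apply Rle_antisym.
  - eapply Rle_trans; [apply D_le_dMX|]. rewrite dMX_same; lra.
  - unfold D; simpl. apply Dform_glb.
    + unfold direct. destruct (Mlab_eq_dec m m); [lra|congruence].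
    + intros k k'. unfold term, hterm, dl.
      pose proof (pm_le1 _ HX x y). pose proof (pm_nn _ HX x (corner X m k)).
      pose proof (pm_nn _ HX y (corner X m k')).
      destruct (Mlab_eq_dec m k), (Mlab_eq_dec k k'), (Mlab_eq_dec m k'); subst; try lra.
      pose proof (pm_tri _ HX x (corner X m k') y).
      rewrite (pm_sym _ HX (corner X m k') y) in H2. lra.
Qed.

Lemma D_small m n x y : D X (m,x) (n,y) < /2 ->
  (m = n /\ dist x y = 2 * D X (m,x) (n,y)) \/
  (exists k, m <> k /\ n <> k /\ m <> n /\
     D X (m,x) (n,y) = dist x (corner X m k) / 2 + dist y (corner X n k) / 2).
Proof.
  intros H. destruct (Mlab_eq_dec m n) as [e|e].
  - subst. left. split; auto. rewrite D_same. lra.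
  - right.
    destruct (D_att m n x y) as [E|[k [k' E]]]; rewrite E in *.
    + unfold direct in H. destruct (Mlab_eq_dec m n); [congruence|lra].
    + unfold term, hterm, dl in *.
      pose proof (pm_nn _ HX x (corner X m k)). pose proof (pm_nn _ HX y (corner X n k')).
      simpl in *.
      destruct (Mlab_eq_dec m k), (Mlab_eq_dec n k'), (Mlab_eq_dec k k'); try lra.
      subst k'. exists k.
      split; [auto|split; [auto|split; [auto|lra]]].
Qed.

Lemma D_zero m n x y : D X (m,x) (n,y) = 0 ->
  (m = n /\ dist x y = 0) \/
  (exists k, m <> k /\ n <> k /\ m <> n /\
     dist x (corner X m k) = 0 /\ dist y (corner X n k) = 0).
Proof.
  intros H. destruct (D_small m n x y) as [[e1 e2]|[k [h1 [h2 [h3 h4]]]]]; [lra|left|right].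
  - split; auto; lra.
  - exists k. pose proof (pm_nn _ HX x (corner X m k)). pose proof (pm_nn _ HX y (corner X n k)).
    repeat split; auto; lra.
Qed.

Lemma hterm_outer m k : 1/2 <= hterm m k (dist (corner X m m) (corner X m k)).
Proof.
  unfold hterm. destruct (Mlab_eq_dec m k); [lra|].
  rewrite (corner_dist m m k); auto. lra.
Qed.

Lemma D_outer m n : m <> n -> D X (m, corner X m m) (n, corner X n n) = 1.
Proof.
  intros H. apply Rle_antisym; [apply D_le1|].
  unfold D; simpl. apply Dform_glb.
  - unfold direct. destruct (Mlab_eq_dec m n); [congruence|lra].
  - intros k k'. unfold term. pose proof (hterm_outer m k). pose proof (hterm_outer n k').
    pose proof (dl_nn k k'). lra.
Qed.
End DProps.

Definition metric (X : tms) : Prop := forall x y : X, dist x y = 0 -> x = y.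

Section FtenProps.
Variable X : tms.
Hypothesis HX : pms X.

Lemma dq_self p : dq X p p = 0.
Proof. rewrite dq_D; auto. apply D_self; auto. Qed.
Lemma dq_sym p q : dq X p q = dq X q p.
Proof. rewrite !dq_D; auto. apply D_sym; auto. Qed.
Lemma dq_cls p p' : dq X p p' = 0 -> forall q, dq X p q = dq X p' q.
Proof.
  intros H q. rewrite !dq_D in *; auto. apply Rle_antisym.
  - pose proof (D_tri X HX p p' q). lra.
  - pose proof (D_tri X HX p' p q). rewrite D_sym in H; auto. lra.
Qed.

Lemma tens_dist m n x y : dist (tens X m x) (tens X n y) = D X (m,x) (n,y).
Proof.
  unfold tens, clsT. simpl. rewrite <- dq_D; auto.
  apply mdist_mcls; intros; auto using dq_self, dq_sym, dq_cls.
Qed.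

Lemma tens_rep (z : Ften X) : z = tens X (fst (mrep z)) (snd (mrep z)).
Proof.
  unfold tens, clsT. rewrite <- surjective_pairing. apply mcls_mrep with (h := I).
Qed.

Lemma tens_eq m n x y : D X (m,x) (n,y) = 0 -> tens X m x = tens X n y.
Proof.
  intros H. unfold tens, clsT. apply mcls_eq; [intros; apply dq_cls; auto|].
  rewrite dq_D; auto.
Qed.

Lemma tens_eq_inv m n x y : tens X m x = tens X n y -> D X (m,x) (n,y) = 0.
Proof.
  intros H. rewrite <- tens_dist, H, tens_dist. apply D_self; auto.
Qed.

Lemma mrep_tens m x : D X (m,x) (mrep (tens X m x)) = 0.
Proof.
  rewrite <- dq_D; auto. unfold tens, clsT. apply mrep_mcls. intros; apply dq_self.
Qed.

Lemma Ften_dist (z w : Ften X) : dist z w = D X (mrep z) (mrep w).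
Proof. simpl. unfold mdist. apply dq_D; auto. Qed.

Lemma Ften_pms : pms (Ften X).
Proof.
  constructor.
  - intros; rewrite Ften_dist; apply D_nn; auto.
  - intros; rewrite Ften_dist; apply D_self; auto.
  - intros; rewrite !Ften_dist; apply D_sym; auto.
  - intros; rewrite !Ften_dist; apply D_tri; auto.
  - intros; rewrite !Ften_dist; apply D_le1; auto.
  - change (dist (tens X ma (corner X ma ma)) (tens X mb (corner X mb mb)) = 1).
    rewrite tens_dist. apply D_outer; auto; discriminate.
  - change (dist (tens X ma (corner X ma ma)) (tens X mc (corner X mc mc)) = 1).
    rewrite tens_dist. apply D_outer; auto; discriminate.
  - change (dist (tens X mb (corner X mb mb)) (tens X mc (corner X mc mc)) = 1).
    rewrite tens_dist. apply D_outer; auto; discriminate.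
Qed.

Lemma Ften_metric : metric (Ften X).
Proof.
  intros z w H. simpl in H. apply mdist_zero in H; auto. intros; apply dq_cls; auto.
Qed.

Lemma tens_junction m n k : m <> k -> n <> k -> tens X m (corner X m k) = tens X n (corner X n k).
Proof.
  intros H1 H2. apply tens_eq. apply Rle_antisym; [|apply D_nn; auto].
  eapply Rle_trans; [apply D_le_junction; eauto|]. simpl. rewrite !(pm_self _ HX). lra.
Qed.
End FtenProps.

Lemma trip_corner (X Y : tms) (h : X -> Y) : tripointed X Y h -> forall m k, h (corner X m k) = corner Y m k.
Proof. intros [e1 [e2 e3]] m k; destruct m, k; simpl; auto. Qed.

Lemma Fmap_tens (X Y : tms) (h : X -> Y) : pms X -> metric X -> pms Y -> tripointed X Y h ->
  forall m x, Fmap X Y h (tens X m x) = tens Y m (h x).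
Proof.
  intros HX MX HY Th m x. unfold Fmap.
  pose proof (mrep_tens X HX m x) as E.
  destruct (mrep (tens X m x)) as [n y]; simpl.
  destruct (D_zero X HX m n x y E) as [[-> e]|[k [h1 [h2 [h3 [e1 e2]]]]]].
  - apply MX in e. subst; auto.
  - apply MX in e1. apply MX in e2. subst.
    rewrite !(trip_corner X Y h Th). apply tens_junction; auto.
Qed.

Definition isometric (X Y : tms) (h : X -> Y) := forall x y, dist (h x) (h y) = dist x y.

Lemma D_map (X Y : tms) (h : X -> Y) : isometric X Y h -> tripointed X Y h ->
  forall m n x y, D Y (m, h x) (n, h y) = D X (m,x) (n,y).
Proof.
  intros I T m n x y. unfold D; simpl. rewrite I.
  replace (fun k => dist (h x) (corner Y m k)) with (fun k => dist x (corner X m k)).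
  2:{ apply functional_extensionality; intros k. rewrite <- (trip_corner X Y h T), I; auto. }
  replace (fun k => dist (h y) (corner Y n k)) with (fun k => dist y (corner X n k)).
  2:{ apply functional_extensionality; intros k. rewrite <- (trip_corner X Y h T), I; auto. }
  reflexivity.
Qed.

Lemma Fmap_iso (X Y : tms) (h : X -> Y) : pms X -> metric X -> pms Y -> tripointed X Y h ->
  isometric X Y h -> isometric (Ften X) (Ften Y) (Fmap X Y h).
Proof.
  intros HX MX HY T I z w.
  rewrite (tens_rep X z), (tens_rep X w), !Fmap_tens, !tens_dist; auto.
  apply D_map; auto.
Qed.

Lemma Fmap_trip (X Y : tms) (h : X -> Y) : pms X -> metric X -> pms Y -> tripointed X Y h ->
  tripointed (Ften X) (Ften Y) (Fmap X Y h).
Proof.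
  intros HX MX HY T.
  unfold tripointed.
  change (pT (Ften X)) with (tens X ma (pT X)).
  change (pL (Ften X)) with (tens X mb (pL X)).
  change (pR (Ften X)) with (tens X mc (pR X)).
  rewrite !Fmap_tens; auto. destruct T as [e1 [e2 e3]]. rewrite e1, e2, e3.
  repeat split; reflexivity.
Qed.

Lemma Itms_pms : pms Itms.
Proof.
  constructor; simpl; unfold dI.
  - intros x y; destruct (Tri_eq_dec x y); lra.
  - intros x; destruct (Tri_eq_dec x x); [lra|congruence].
  - intros x y; destruct (Tri_eq_dec x y), (Tri_eq_dec y x); subst; try congruence; lra.
  - intros x y z; destruct (Tri_eq_dec x z), (Tri_eq_dec x y), (Tri_eq_dec y z); subst;
      try congruence; lra.
  - intros x y; destruct (Tri_eq_dec x y); lra.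
  - reflexivity. - reflexivity. - reflexivity.
Qed.

Lemma Itms_metric : metric Itms.
Proof. intros x y; simpl; unfold dI; destruct (Tri_eq_dec x y); auto. intros; lra. Qed.

Lemma bang_iso : forall x y : Itms, @dist (Ften Itms) (bang x) (bang y) = dist x y.
Proof.
  assert (Hb : forall z, bang z = tens Itms
        (match z with tT => ma | tL => mb | tR => mc end)
        (corner Itms (match z with tT => ma | tL => mb | tR => mc end)
                     (match z with tT => ma | tL => mb | tR => mc end))).
  { destruct z; reflexivity. }
  intros x y. rewrite !Hb, tens_dist by exact Itms_pms.
  destruct x, y; simpl;
    solve [ rewrite D_self by exact Itms_pms; reflexivity
          | apply D_outer; [exact Itms_pms|discriminate] ].
Qed.

Lemma levels n : pms (Fn n) /\ metric (Fn n) /\ tripointed (Fn n) (Fn (Datatypes.S n)) (emb n)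
  /\ isometric (Fn n) (Fn (Datatypes.S n)) (emb n).
Proof.
  induction n as [|n [P [M [T I]]]].
  - split; [exact Itms_pms|]. split; [exact Itms_metric|].
    split; [repeat split; reflexivity|].
    intros x y. exact (bang_iso x y).
  - assert (P' : pms (Fn (Datatypes.S n))) by (apply Ften_pms; auto).
    assert (M' : metric (Fn (Datatypes.S n))) by (apply Ften_metric; auto).
    assert (P'' : pms (Fn (Datatypes.S (Datatypes.S n)))) by (apply Ften_pms; auto).
    split; [auto|]. split; [auto|]. simpl emb. split.
    + apply Fmap_trip; auto.
    + apply Fmap_iso; auto.
Qed.

Lemma Fn_pms n : pms (Fn n). Proof. apply levels. Qed.
Lemma Fn_metric n : metric (Fn n). Proof. apply levels. Qed.
Lemma emb_trip n : tripointed _ _ (emb n). Proof. apply levels. Qed.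
Lemma emb_iso n : isometric _ _ (emb n). Proof. apply levels. Qed.

Notation Sn := Datatypes.S.

Tactic Notation "dec_nat" "as" simple_intropattern(p) := match goal with |- context [Nat.eq_dec ?a ?b] => destruct (Nat.eq_dec a b) as p end.
Tactic Notation "dec_nat" := match goal with |- context [Nat.eq_dec ?a ?b] => destruct (Nat.eq_dec a b) end.

Definition castF {i j : nat} (e : i = j) (x : Fn i) : Fn j :=
  eq_rect i (fun k => car (Fn k)) x j e.

Fixpoint liftN (N : nat) : forall n, Fn n -> Fn N :=
  match N return forall n, Fn n -> Fn N with
  | O => fun n x => match Nat.eq_dec n 0 with left e => castF e x | right _ => tT end
  | Sn N' => fun n x => match Nat.eq_dec n (Sn N') with
        | left e => castF e x | right _ => emb N' (liftN N' n x) end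
  end.

Arguments liftN N%_nat_scope n%_nat_scope x.
Arguments Fn n%_nat_scope.
Arguments emb n%_nat_scope _.

Lemma liftN_id n (x : Fn n) : liftN n n x = x.
Proof.
  destruct n; [reflexivity|]. cbn [liftN]. dec_nat as [e|c]; [|congruence].
  rewrite (UIP_refl_nat _ e); reflexivity.
Qed.

Lemma liftN_S N n (x : Fn n) : (n <= N)%nat -> liftN (Sn N) n x = emb N (liftN N n x).
Proof. intros H. cbn [liftN]. dec_nat; [lia|reflexivity]. Qed.

Lemma liftN_cast i j (e : i = j) n (x : Fn n) : castF e (liftN i n x) = liftN j n x.
Proof. destruct e; reflexivity. Qed.

Lemma liftN_embUp n j (x : Fn n) : liftN (j + n) n x = embUp n j x.
Proof.
  induction j.
  - apply liftN_id.
  - change (Sn j + n)%nat with (Sn (j + n)). rewrite liftN_S by lia. rewrite IHj. reflexivity.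
Qed.

Lemma dGraw_eq n (x : Fn n) m (y : Fn m) :
  dGraw (existT _ n x) (existT _ m y) = dist (liftN (n+m) n x) (liftN (n+m) m y).
Proof.
  unfold dGraw. rewrite <- (liftN_embUp n m x), <- (liftN_embUp m n y).
  change (eq_rect (m + n)%nat (fun k => car (Fn k)) (liftN (m + n) n x) (n + m)%nat (Nat.add_comm m n))
    with (castF (Nat.add_comm m n) (liftN (m + n) n x)).
  rewrite liftN_cast. reflexivity.
Qed.

Lemma lift_up N t n (x : Fn n) m (y : Fn m) : (n <= N)%nat -> (m <= N)%nat ->
  dist (liftN (t + N) n x) (liftN (t + N) m y) = dist (liftN N n x) (liftN N m y).
Proof.
  intros H1 H2. induction t; [reflexivity|].
  simpl plus. rewrite !liftN_S by lia. rewrite emb_iso. exact IHt.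
Qed.

Lemma lift_level N1 N2 n (x : Fn n) m (y : Fn m) :
  (n <= N1)%nat -> (m <= N1)%nat -> (n <= N2)%nat -> (m <= N2)%nat ->
  dist (liftN N1 n x) (liftN N1 m y) = dist (liftN N2 n x) (liftN N2 m y).
Proof.
  intros. rewrite <- (lift_up N1 N2) by lia. rewrite <- (lift_up N2 N1) by lia.
  rewrite (Nat.add_comm N2 N1). reflexivity.
Qed.

Lemma dGraw_lift N n (x : Fn n) m (y : Fn m) : (n <= N)%nat -> (m <= N)%nat ->
  dGraw (existT _ n x) (existT _ m y) = dist (liftN N n x) (liftN N m y).
Proof. intros. rewrite dGraw_eq. apply lift_level; lia. Qed.

Definition lvl (p : Graw) : nat := projT1 p.
Definition lift (N : nat) (p : Graw) : Fn N := liftN N (projT1 p) (projT2 p).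

Lemma dGraw_lift' N p q : (lvl p <= N)%nat -> (lvl q <= N)%nat ->
  dGraw p q = dist (lift N p) (lift N q).
Proof. destruct p, q; unfold lvl, lift; simpl. apply dGraw_lift. Qed.

Lemma dGraw_self p : dGraw p p = 0.
Proof. rewrite (dGraw_lift' (lvl p)) by lia. apply (pm_self _ (Fn_pms _)). Qed.
Lemma dGraw_nn p q : 0 <= dGraw p q.
Proof. rewrite (dGraw_lift' (lvl p + lvl q)) by lia. apply (pm_nn _ (Fn_pms _)). Qed.
Lemma dGraw_le1 p q : dGraw p q <= 1.
Proof. rewrite (dGraw_lift' (lvl p + lvl q)) by lia. apply (pm_le1 _ (Fn_pms _)). Qed.
Lemma dGraw_sym p q : dGraw p q = dGraw q p.
Proof.
  rewrite (dGraw_lift' (lvl p + lvl q)) by lia. rewrite (dGraw_lift' (lvl p + lvl q) q p) by lia.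
  apply (pm_sym _ (Fn_pms _)).
Qed.
Lemma dGraw_tri p q r : dGraw p r <= dGraw p q + dGraw q r.
Proof.
  set (N := (lvl p + lvl q + lvl r)%nat).
  rewrite (dGraw_lift' N p r), (dGraw_lift' N p q), (dGraw_lift' N q r) by (unfold N; lia).
  apply (pm_tri _ (Fn_pms _)).
Qed.
Lemma dGraw_cls p p' : dGraw p p' = 0 -> forall q, dGraw p q = dGraw p' q.
Proof.
  intros H q. apply Rle_antisym.
  - pose proof (dGraw_tri p p' q). lra.
  - pose proof (dGraw_tri p' p q). rewrite dGraw_sym in H. lra.
Qed.

Definition clsG (p : Graw) : G := clsT dGraw p.

Lemma distG_cls p q : dist (clsG p) (clsG q) = dGraw p q.
Proof.
  unfold clsG, clsT. simpl. apply mdist_mcls; intros; auto using dGraw_self, dGraw_sym, dGraw_cls.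
Qed.

Lemma G_rep (w : G) : w = clsG (mrep w).
Proof. unfold clsG, clsT. apply mcls_mrep with (h := I). Qed.

Lemma clsG_eq p q : dGraw p q = 0 -> clsG p = clsG q.
Proof. intros H. unfold clsG, clsT. apply mcls_eq; auto. intros; apply dGraw_cls; auto. Qed.

Lemma distG (w z : G) : dist w z = dGraw (mrep w) (mrep z).
Proof. reflexivity. Qed.

Lemma G_pms : pms G.
Proof.
  constructor; intros; rewrite ?distG.
  - apply dGraw_nn.
  - apply dGraw_self.
  - apply dGraw_sym.
  - apply dGraw_tri.
  - apply dGraw_le1.
  - change (dist (clsG (existT _ 0%nat tT)) (clsG (existT _ 0%nat tL)) = 1).
    rewrite distG_cls. rewrite (dGraw_lift 0) by lia. reflexivity.
  - change (dist (clsG (existT _ 0%nat tT)) (clsG (existT _ 0%nat tR)) = 1).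
    rewrite distG_cls. rewrite (dGraw_lift 0) by lia. reflexivity.
  - change (dist (clsG (existT _ 0%nat tL)) (clsG (existT _ 0%nat tR)) = 1).
    rewrite distG_cls. rewrite (dGraw_lift 0) by lia. reflexivity.
Qed.

Lemma G_metric : metric G.
Proof.
  intros z w H. apply mdist_zero in H; auto. intros; apply dGraw_cls; auto.
Qed.

Lemma cornerG m k : corner G m k = clsG (existT _ 0%nat (corner Itms m k)).
Proof. destruct m, k; reflexivity. Qed.

Lemma liftN_corner N m k : liftN N 0 (corner Itms m k) = corner (Fn N) m k.
Proof.
  induction N.
  - apply liftN_id.
  - rewrite liftN_S by lia. rewrite IHN. apply (trip_corner _ _ _ (emb_trip N)).
Qed.

Lemma liftN_tens N n m (x : Fn n) : (n <= N)%nat ->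
  liftN (Sn N) (Sn n) (tens (Fn n) m x) = tens (Fn N) m (liftN N n x).
Proof.
  intros H. destruct (Nat.le_exists_sub n N H) as [t [-> _]]. clear H.
  induction t.
  - simpl plus. rewrite !liftN_id. reflexivity.
  - change (Sn t + n)%nat with (Sn (t + n)).
    rewrite liftN_S by lia. rewrite IHt. simpl emb.
    rewrite (Fmap_tens (Fn (t+n)) (Fn (Sn (t+n))) _ (Fn_pms _) (Fn_metric _) (Fn_pms (Sn (t+n))) (emb_trip _)).
    rewrite liftN_S by lia. reflexivity.
Qed.

Lemma DG_lift N n (x : Fn n) n' (y : Fn n') m m' : (n <= N)%nat -> (n' <= N)%nat ->
  D G (m, clsG (existT _ n x)) (m', clsG (existT _ n' y)) =
  D (Fn N) (m, liftN N n x) (m', liftN N n' y).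
Proof.
  intros H1 H2. unfold D; cbn [fst snd]. rewrite distG_cls, (dGraw_lift N) by lia.
  replace (fun k => dist (clsG (existT _ n x)) (corner G m k))
    with (fun k => dist (liftN N n x) (corner (Fn N) m k)).
  2:{ apply functional_extensionality; intros k. rewrite cornerG, distG_cls, (dGraw_lift N) by lia.
      rewrite liftN_corner. reflexivity. }
  replace (fun k => dist (clsG (existT _ n' y)) (corner G m' k))
    with (fun k => dist (liftN N n' y) (corner (Fn N) m' k)).
  2:{ apply functional_extensionality; intros k. rewrite cornerG, distG_cls, (dGraw_lift N) by lia.
      rewrite liftN_corner. reflexivity. }
  reflexivity.
Qed.

Lemma galg_form (z : Ften G) : exists n m1 (y : Fn n),
  galg z = clsG (existT _ (Sn n) (tens (Fn n) m1 y)) /\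
  D G (mrep z) (m1, clsG (existT _ n y)) = 0.
Proof.
  unfold galg. destruct (mrep z) as [m1 u1]; simpl.
  pose proof (G_rep u1) as Hu.
  destruct (mrep u1) as [n x]. exists n, m1, x. split; [reflexivity|].
  rewrite <- Hu. apply D_self, G_pms.
Qed.

Lemma D_eq_left X (HX : pms X) p p' q : D X p p' = 0 -> D X p q = D X p' q.
Proof.
  intros H. apply Rle_antisym.
  - pose proof (D_tri X HX p p' q). lra.
  - pose proof (D_tri X HX p' p q). rewrite D_sym in H; auto. lra.
Qed.

Lemma D_eq_right X (HX : pms X) p q q' : D X q q' = 0 -> D X p q = D X p q'.
Proof.
  intros H. rewrite (D_sym X HX p q), (D_sym X HX p q'). apply D_eq_left; auto.
Qed.

Lemma tens_distN N m n (x y : Fn N) :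
  @dist (Fn (Sn N)) (tens (Fn N) m x) (tens (Fn N) n y) = D (Fn N) (m,x) (n,y).
Proof. apply tens_dist, Fn_pms. Qed.

Lemma galg_tens_dist m (u : G) n' m' (y : Fn n') :
  dist (galg (tens G m u)) (clsG (existT _ (Sn n') (tens (Fn n') m' y))) =
  D G (m,u) (m', clsG (existT _ n' y)).
Proof.
  destruct (galg_form (tens G m u)) as [n [m1 [x [E1 E2]]]]. rewrite E1.
  rewrite distG_cls. rewrite (dGraw_lift (Sn (n + n'))) by lia.
  rewrite !liftN_tens by lia. rewrite tens_distN.
  rewrite <- DG_lift by lia.
  rewrite (D_eq_left G G_pms (m,u) (mrep (tens G m u))) by (apply mrep_tens, G_pms).
  pose proof (D_eq_left G G_pms _ _ (m', clsG (existT _ n' y)) E2). lra.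
Qed.

Lemma galg_D m (u : G) m' (v : G) :
  dist (galg (tens G m u)) (galg (tens G m' v)) = D G (m,u) (m',v).
Proof.
  destruct (galg_form (tens G m' v)) as [n [m1 [x [E1 E2]]]]. rewrite E1.
  rewrite galg_tens_dist.
  pose proof (mrep_tens G G_pms m' v) as H1.
  pose proof (D_tri G G_pms (m',v) (mrep (tens G m' v)) (m1, clsG (existT _ n x))).
  pose proof (D_nn G G_pms (m',v) (m1, clsG (existT _ n x))).
  assert (H3 : D G (m',v) (m1, clsG (existT _ n x)) = 0) by lra.
  pose proof (D_eq_right G G_pms (m,u) _ _ H3). lra.
Qed.

Lemma galg_corner m : galg (tens G m (corner G m m)) = corner G m m.
Proof.
  assert (E : corner G m m = clsG (existT _ 1%nat (tens (Fn 0) m (corner Itms m m)))).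
  { rewrite cornerG. apply clsG_eq. rewrite (dGraw_lift 1) by lia.
    rewrite liftN_id. rewrite liftN_S by lia. simpl liftN.
    destruct m; simpl; apply (pm_self _ (Fn_pms 1)). }
  apply G_metric. rewrite E at 2. rewrite galg_tens_dist. rewrite <- cornerG.
  apply D_self, G_pms.
Qed.

Lemma galg_surj (w : G) : exists m u, galg (tens G m u) = w.
Proof.
  rewrite (G_rep w). destruct (mrep w) as [n x].
  pose (z := emb n x). pose proof (tens_rep (Fn n) z) as Ez.
  assert (E : forall t : Fn (Sn n), z = t -> clsG (existT _ n x) = clsG (existT _ (Sn n) t)).
  { intros t Ht. apply clsG_eq. rewrite (dGraw_lift (Sn n)) by lia. rewrite liftN_id.
    rewrite liftN_S by lia. rewrite liftN_id. fold z. rewrite <- Ht.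
    apply (pm_self _ (Fn_pms _)). }
  rewrite (E _ Ez). exists (fst (mrep z)), (clsG (existT _ n (snd (mrep z)))).
  apply G_metric. rewrite galg_tens_dist. apply D_self, G_pms.
Qed.

Lemma cv_const c : Un_cv (fun _ => c) c.
Proof. intros eps H. exists 0%nat. intros. unfold R_dist. rewrite Rminus_diag, Rabs_R0. lra. Qed.

Lemma cv_squeeze (x e : nat -> R) l : (forall n, Rabs (x n - l) <= e n) -> Un_cv e 0 -> Un_cv x l.
Proof.
  intros H He eps Heps. destruct (He eps Heps) as [N HN]. exists N. intros n Hn.
  specialize (HN n Hn). unfold R_dist in *. rewrite Rminus_0_r in HN.
  pose proof (H n). pose proof (Rle_abs (e n)). lra.
Qed.

Lemma cv_abs_sub x l : Un_cv x l -> Un_cv (fun n => Rabs (x n - l)) 0.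
Proof.
  intros H eps Heps. destruct (H eps Heps) as [N HN]. exists N. intros n Hn.
  specialize (HN n Hn). unfold R_dist in *. rewrite Rminus_0_r, Rabs_Rabsolu. exact HN.
Qed.

Lemma cv_unique_lim u l : Un_cv u l -> seq_lim u = l.
Proof.
  intros H. unfold seq_lim. destruct (excluded_middle_informative _) as [h|n].
  - destruct (constructive_indefinite_description _ h) as [l' Hl']; simpl.
    eapply UL_sequence; eauto.
  - exfalso; eauto.
Qed.

Lemma cv_le_const u l c : Un_cv u l -> (forall n, u n <= c) -> l <= c.
Proof.
  intros H1 H2. apply (Rle_cv_lim (Un:=u) (Vn:=fun _ => c)); auto. apply cv_const.
Qed.
Lemma cv_ge_const u l c : Un_cv u l -> (forall n, c <= u n) -> c <= l.
Proof.
  intros H1 H2. apply (Rle_cv_lim (Un:=fun _ => c) (Vn:=u)); auto. apply cv_const.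
Qed.

Lemma Gp : pms G. Proof. exact G_pms. Qed.

Lemma dist_cauchy (u v : nat -> G) : cauchy u -> cauchy v ->
  exists l, Un_cv (fun n => dist (u n) (v n)) l.
Proof.
  intros Hu Hv. destruct (R_complete (fun n => dist (u n) (v n))) as [l Hl]; [|eauto].
  intros eps He. destruct (Hu (eps/2)) as [N1 H1]; [lra|]. destruct (Hv (eps/2)) as [N2 H2]; [lra|].
  exists (N1 + N2)%nat. intros n m Hn Hm. unfold R_dist.
  specialize (H1 n m ltac:(lia) ltac:(lia)). specialize (H2 n m ltac:(lia) ltac:(lia)).
  pose proof (pm_tri _ Gp (u n) (u m) (v n)). pose proof (pm_tri _ Gp (u m) (v m) (v n)).
  pose proof (pm_tri _ Gp (u m) (u n) (v m)). pose proof (pm_tri _ Gp (u n) (v n) (v m)).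
  rewrite (pm_sym _ Gp (u m) (u n)) in *. rewrite (pm_sym _ Gp (v m) (v n)) in *.
  apply Rabs_def1; lra.
Qed.

Lemma dS_cv (u v : nat -> G) : cauchy u -> cauchy v ->
  Un_cv (fun n => dist (u n) (v n)) (dS u v).
Proof.
  intros Hu Hv. destruct (dist_cauchy u v Hu Hv) as [l Hl].
  unfold dS. rewrite (cv_unique_lim _ l Hl). exact Hl.
Qed.

Lemma dS_self u : cauchy u -> dS u u = 0.
Proof.
  intros Hu. unfold dS. apply cv_unique_lim.
  replace (fun n => dist (u n) (u n)) with (fun _ : nat => 0).
  - apply cv_const.
  - apply functional_extensionality; intros; rewrite (pm_self _ Gp); auto.
Qed.

Lemma dS_sym u v : cauchy u -> cauchy v -> dS u v = dS v u.
Proof.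
  intros Hu Hv. unfold dS at 1. apply cv_unique_lim.
  replace (fun n => dist (u n) (v n)) with (fun n => dist (v n) (u n)).
  - apply dS_cv; auto.
  - apply functional_extensionality; intros; apply (pm_sym _ Gp).
Qed.

Lemma dS_nn u v : cauchy u -> cauchy v -> 0 <= dS u v.
Proof. intros. eapply cv_ge_const; [apply dS_cv; auto|]. intros; apply (pm_nn _ Gp). Qed.

Lemma dS_le1 u v : cauchy u -> cauchy v -> dS u v <= 1.
Proof. intros. eapply cv_le_const; [apply dS_cv; auto|]. intros; apply (pm_le1 _ Gp). Qed.

Lemma dS_tri u v w : cauchy u -> cauchy v -> cauchy w -> dS u w <= dS u v + dS v w.
Proof.
  intros. apply (Rle_cv_lim (Un:=fun n => dist (u n) (w n)) (Vn:=fun n => dist (u n) (v n) + dist (v n) (w n))).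
  - intros; apply (pm_tri _ Gp).
  - apply dS_cv; auto.
  - apply CV_plus; apply dS_cv; auto.
Qed.

Lemma dS_cls u u' : cauchy u -> cauchy u' -> dS u u' = 0 -> forall v, dS u v = dS u' v.
Proof.
  intros Hu Hu' H0 v.
  assert (Hc : forall a b, cauchy a -> cauchy b -> dS a b = 0 -> forall l,
     Un_cv (fun n => dist (a n) (v n)) l -> Un_cv (fun n => dist (b n) (v n)) l).
  { intros a b Ha Hb Hab l Hl. apply cv_squeeze with
      (e := fun n => Rabs (dist (a n) (v n) - l) + dist (a n) (b n)).
    - intros n. pose proof (pm_tri _ Gp (b n) (a n) (v n)). pose proof (pm_tri _ Gp (a n) (b n) (v n)).
      rewrite (pm_sym _ Gp (b n) (a n)) in *.
      pose proof (Rabs_triang (dist (b n) (v n) - dist (a n) (v n)) (dist (a n) (v n) - l)) as T3.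
      replace (dist (b n) (v n) - dist (a n) (v n) + (dist (a n) (v n) - l))
        with (dist (b n) (v n) - l) in T3 by ring.
      assert (Rabs (dist (b n) (v n) - dist (a n) (v n)) <= dist (a n) (b n)) by (apply Rabs_le; lra).
      lra.
    - assert (Hz : Un_cv (fun n => dist (a n) (b n)) 0) by (rewrite <- Hab; apply dS_cv; auto).
      pose proof (CV_plus _ _ _ _ (cv_abs_sub _ _ Hl) Hz) as Hp. rewrite Rplus_0_r in Hp. exact Hp. }
  rewrite dS_sym in H0; auto.
  destruct (classic (exists l, Un_cv (fun n => dist (u n) (v n)) l)) as [[l Hl]|Hn].
  - unfold dS. rewrite (cv_unique_lim _ l Hl). symmetry. apply cv_unique_lim.
    apply (Hc u u'); auto. rewrite dS_sym; auto.
  - unfold dS, seq_lim.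
    destruct (excluded_middle_informative (exists l, Un_cv (fun n => dist (u n) (v n)) l)); [tauto|].
    destruct (excluded_middle_informative (exists l, Un_cv (fun n => dist (u' n) (v n)) l))
      as [[l Hl]|]; [|reflexivity].
    exfalso. apply Hn. exists l. apply (Hc u' u); auto.
Qed.

Definition clsS (u : nat -> G) (h : cauchy u) : S := mcls cauchy dS u h.

Lemma distS (P Q : S) : dist P Q = dS (mrep P) (mrep Q).
Proof. reflexivity. Qed.

Lemma distS_cls u v hu hv : dist (clsS u hu) (clsS v hv) = dS u v.
Proof.
  unfold clsS. simpl. apply mdist_mcls.
  - apply dS_self. - apply dS_sym. - apply dS_cls.
Qed.

Lemma S_rep (P : S) : P = clsS (mrep P) (mrep_dom _ _ _ P).
Proof. apply mcls_mrep. Qed.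

Lemma clsS_eq u v hu hv : dS u v = 0 -> clsS u hu = clsS v hv.
Proof. intros. unfold clsS. apply mcls_eq; auto. apply dS_cls. Qed.

Lemma mrepS_cauchy (P : S) : cauchy (mrep P).
Proof. apply (mrep_dom _ _ _ P). Qed.

Lemma cornerS m k : corner S m k = clsS (fun _ => corner G m k) (const_cauchy _).
Proof. destruct m, k; reflexivity. Qed.

Lemma S_pms : pms S.
Proof.
  constructor.
  - intros; rewrite ?distS; apply dS_nn; apply mrepS_cauchy.
  - intros; rewrite ?distS; apply dS_self; apply mrepS_cauchy.
  - intros; rewrite ?distS; apply dS_sym; apply mrepS_cauchy.
  - intros; rewrite ?distS; apply dS_tri; apply mrepS_cauchy.
  - intros; rewrite ?distS; apply dS_le1; apply mrepS_cauchy.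
  - change (dist (corner S ma ma) (corner S mb mb) = 1). rewrite !cornerS, distS_cls.
    apply cv_unique_lim.
    replace (fun _ : nat => dist (corner G ma ma) (corner G mb mb)) with (fun _ : nat => 1);
      [apply cv_const|]. apply functional_extensionality; intros; symmetry; apply (pm_TL _ Gp).
  - change (dist (corner S ma ma) (corner S mc mc) = 1). rewrite !cornerS, distS_cls.
    apply cv_unique_lim.
    replace (fun _ : nat => dist (corner G ma ma) (corner G mc mc)) with (fun _ : nat => 1);
      [apply cv_const|]. apply functional_extensionality; intros; symmetry; apply (pm_TR _ Gp).
  - change (dist (corner S mb mb) (corner S mc mc) = 1). rewrite !cornerS, distS_cls.
    apply cv_unique_lim.
    replace (fun _ : nat => dist (corner G mb mb) (corner G mc mc)) with (fun _ : nat => 1);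
      [apply cv_const|]. apply functional_extensionality; intros; symmetry; apply (pm_LR _ Gp).
Qed.

Lemma S_metric : metric S.
Proof. intros P Q H. apply mdist_zero in H; auto using dS_cls. Qed.

Definition sum3 (f : Mlab -> R) := f ma + f mb + f mc.
Lemma sum3_ge f k : (forall j, 0 <= f j) -> f k <= sum3 f.
Proof. intros H; unfold sum3; pose proof (H ma); pose proof (H mb); pose proof (H mc); destruct k; lra. Qed.
Lemma sum3_nn f : (forall j, 0 <= f j) -> 0 <= sum3 f.
Proof. intros H; unfold sum3; pose proof (H ma); pose proof (H mb); pose proof (H mc); lra. Qed.

Definition Eerr (a a' : R) (b b' c c' : Mlab -> R) :=
  Rabs (a - a') + sum3 (fun k => Rabs (b k - b' k)) + sum3 (fun k => Rabs (c k - c' k)).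

Lemma Dform_lip mm nn a a' b b' c c' :
  Dform mm nn a b c <= Dform mm nn a' b' c' + Eerr a a' b b' c c'.
Proof.
  unfold Eerr.
  assert (Hb : forall k, Rabs (b k - b' k) <= sum3 (fun k => Rabs (b k - b' k)))
    by (intros; apply (sum3_ge (fun k => Rabs (b k - b' k))); intros; apply Rabs_pos).
  assert (Hc : forall k, Rabs (c k - c' k) <= sum3 (fun k => Rabs (c k - c' k)))
    by (intros; apply (sum3_ge (fun k => Rabs (c k - c' k))); intros; apply Rabs_pos).
  pose proof (sum3_nn (fun k => Rabs (b k - b' k)) (fun _ => Rabs_pos _)).
  pose proof (sum3_nn (fun k => Rabs (c k - c' k)) (fun _ => Rabs_pos _)).
  pose proof (Rabs_pos (a - a')). pose proof (Rle_abs (a - a')).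
  destruct (Dform_att mm nn a' b' c') as [E|[k [k' E]]]; rewrite E.
  - eapply Rle_trans; [apply Dform_le_direct|]. unfold direct.
    destruct (Mlab_eq_dec mm nn); lra.
  - eapply Rle_trans; [apply (Dform_le_term _ _ _ _ _ k k')|]. unfold term, hterm.
    specialize (Hb k). specialize (Hc k'). pose proof (Rle_abs (b k - b' k)).
    pose proof (Rle_abs (c k' - c' k')).
    destruct (Mlab_eq_dec mm k), (Mlab_eq_dec nn k'); lra.
Qed.

Lemma Eerr_sym a a' b b' c c' : Eerr a a' b b' c c' = Eerr a' a b' b c' c.
Proof.
  unfold Eerr, sum3. rewrite (Rabs_minus_sym a), (Rabs_minus_sym (b ma)), (Rabs_minus_sym (b mb)),
    (Rabs_minus_sym (b mc)), (Rabs_minus_sym (c ma)), (Rabs_minus_sym (c mb)), (Rabs_minus_sym (c mc)).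
  reflexivity.
Qed.

Lemma cv_sum3 (f : nat -> Mlab -> R) : (forall k, Un_cv (fun n => f n k) 0) ->
  Un_cv (fun n => sum3 (f n)) 0.
Proof.
  intros H. unfold sum3. replace 0 with (0 + 0 + 0) by ring.
  apply CV_plus; [apply CV_plus|]; apply H.
Qed.

Lemma Dform_cv mm nn (a : nat -> R) la (b : nat -> Mlab -> R) lb c lc :
  Un_cv a la -> (forall k, Un_cv (fun n => b n k) (lb k)) -> (forall k, Un_cv (fun n => c n k) (lc k)) ->
  Un_cv (fun n => Dform mm nn (a n) (b n) (c n)) (Dform mm nn la lb lc).
Proof.
  intros Ha Hb Hc. apply cv_squeeze with (e := fun n => Eerr (a n) la (b n) lb (c n) lc).
  - intros n. apply Rabs_le. split.
    + pose proof (Dform_lip mm nn la (a n) lb (b n) lc (c n)). rewrite Eerr_sym in H. lra.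
    + pose proof (Dform_lip mm nn (a n) la (b n) lb (c n) lc). lra.
  - unfold Eerr. replace 0 with (0 + 0 + 0) by ring.
    apply CV_plus; [apply CV_plus|].
    + apply cv_abs_sub; auto.
    + apply (cv_sum3 (fun n k => Rabs (b n k - lb k))). intros; apply cv_abs_sub; auto.
    + apply (cv_sum3 (fun n k => Rabs (c n k - lc k))). intros; apply cv_abs_sub; auto.
Qed.

Lemma cauchy_galg m (v : nat -> G) : cauchy v -> cauchy (fun k => galg (tens G m (v k))).
Proof.
  intros Hv eps He. destruct (Hv eps He) as [N HN]. exists N. intros i j Hi Hj.
  rewrite galg_D, D_same by exact Gp. specialize (HN i j Hi Hj).
  pose proof (pm_nn _ Gp (v i) (v j)). lra.
Qed.

Lemma clsS_pi u h1 h2 : clsS u h1 = clsS u h2.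
Proof. f_equal. apply proof_irrelevance. Qed.

Lemma S_rep' (P : S) h : clsS (mrep P) h = P.
Proof.
  pose proof (S_rep P) as E. rewrite (clsS_pi _ h (mrep_dom _ _ _ P)). symmetry. exact E.
Qed.

Lemma PSD m m' (v v' : nat -> G) hv hv' :
  dS (fun k => galg (tens G m (v k))) (fun k => galg (tens G m' (v' k))) =
  D S (m, clsS v hv) (m', clsS v' hv').
Proof.
  apply cv_unique_lim.
  replace (fun n => dist (galg (tens G m (v n))) (galg (tens G m' (v' n))))
    with (fun n => Dform m m' (dist (v n) (v' n)) (fun j => dist (v n) (corner G m j))
                    (fun j => dist (v' n) (corner G m' j))).
  2:{ apply functional_extensionality; intros n. rewrite galg_D. reflexivity. }
  unfold D. cbn [fst snd]. rewrite distS_cls.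
  replace (fun k => dist (clsS v hv) (corner S m k)) with (fun k => dS v (fun _ => corner G m k)).
  2:{ apply functional_extensionality; intros k. rewrite cornerS, distS_cls. reflexivity. }
  replace (fun k => dist (clsS v' hv') (corner S m' k)) with (fun k => dS v' (fun _ => corner G m' k)).
  2:{ apply functional_extensionality; intros k. rewrite cornerS, distS_cls. reflexivity. }
  apply Dform_cv.
  - apply dS_cv; auto.
  - intros k. apply (dS_cv v (fun _ => corner G m k)); auto using const_cauchy.
  - intros k. apply (dS_cv v' (fun _ => corner G m' k)); auto using const_cauchy.
Qed.

Lemma PS0 m (p : S) :
  psi (tens S m p) = clsS (fun k => galg (tens G m (mrep p k))) (cauchy_galg m _ (mrepS_cauchy p)).
Proof.
  unfold psi, mcls_or. cbv zeta.
  pose proof (mrep_tens S S_pms m p) as E.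
  destruct (mrep (tens S m p)) as [m1 p1]. cbn [fst snd].
  destruct (excluded_middle_informative _) as [h|n].
  - change (clsS (fun k => galg (tens G m1 (mrep p1 k))) h =
            clsS (fun k => galg (tens G m (mrep p k))) (cauchy_galg m _ (mrepS_cauchy p))).
    apply clsS_eq. rewrite (PSD m1 m (mrep p1) (mrep p) (mrepS_cauchy p1) (mrepS_cauchy p)).
    rewrite !S_rep'. rewrite D_sym by exact S_pms. exact E.
  - exfalso; apply n. apply cauchy_galg, mrepS_cauchy.
Qed.

Lemma PS m p m' q : dist (psi (tens S m p)) (psi (tens S m' q)) = D S (m,p) (m',q).
Proof.
  rewrite !PS0, distS_cls, (PSD m m' _ _ (mrepS_cauchy p) (mrepS_cauchy q)), !S_rep'. reflexivity.
Qed.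

Lemma psi_inj (z z' : Ften S) : psi z = psi z' -> z = z'.
Proof.
  intros H. rewrite (tens_rep S z), (tens_rep S z') in *.
  apply tens_eq; [exact S_pms|]. rewrite <- PS, H. apply (pm_self _ S_pms).
Qed.

Lemma s_psi z : s (psi z) = z.
Proof.
  unfold s. destruct (excluded_middle_informative _) as [h|n].
  - destruct (constructive_indefinite_description _ h) as [z' Hz']; simpl. apply psi_inj; auto.
  - exfalso; eauto.
Qed.

Lemma cv_le_ev x l c : Un_cv x l -> (exists N, forall k, (N <= k)%nat -> x k <= c) -> l <= c.
Proof.
  intros H [N HN]. apply Rnot_lt_le; intros Hlt.
  destruct (H (l - c)) as [N' HN']; [lra|].
  specialize (HN (N + N')%nat ltac:(lia)). specialize (HN' (N + N')%nat ltac:(lia)).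
  unfold R_dist in HN'. apply Rabs_def2 in HN'. lra.
Qed.

Lemma pigeon (ml : nat -> Mlab) : exists m, forall N, exists j, (N <= j)%nat /\ ml j = m.
Proof.
  apply NNPP; intros Hn.
  assert (H : forall m, exists N, forall j, (N <= j)%nat -> ml j <> m).
  { intros m. apply NNPP; intros Hm. apply Hn. exists m. intros N.
    apply NNPP; intros HN. apply Hm. exists N. intros j Hj Hj'. apply HN. eauto. }
  destruct (H ma) as [Na Ha], (H mb) as [Nb Hb], (H mc) as [Nc Hc].
  specialize (Ha (Na+Nb+Nc)%nat ltac:(lia)). specialize (Hb (Na+Nb+Nc)%nat ltac:(lia)).
  specialize (Hc (Na+Nb+Nc)%nat ltac:(lia)). destruct (ml (Na+Nb+Nc)%nat); congruence.
Qed.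

Lemma psi_surj (y : S) : exists z, psi z = y.
Proof.
  set (v := mrep y). assert (hv : cauchy v) by apply mrepS_cauchy.
  assert (Hs : forall k, exists mu : Mlab * G, galg (tens G (fst mu) (snd mu)) = v k).
  { intros k. destruct (galg_surj (v k)) as [m [u Hu]]. exists (m,u); auto. }
  set (mk := fun k => proj1_sig (constructive_indefinite_description _ (Hs k))).
  assert (Hmk : forall k, galg (tens G (fst (mk k)) (snd (mk k))) = v k).
  { intros k. unfold mk. destruct (constructive_indefinite_description _ (Hs k)); auto. }
  set (ml := fun k => fst (mk k)). set (w := fun k => snd (mk k)).
  destruct (pigeon ml) as [m Hm].
  set (u := fun k => if Mlab_eq_dec (ml k) m then w k else corner G m (third m (ml k))).
  assert (KE : forall eps, 0 < eps <= /4 -> exists N, forall k, (N <= k)%nat ->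
     dist (galg (tens G m (u k))) (v k) <= eps /\
     forall j, (N <= j)%nat -> ml j = m -> dist (u k) (w j) <= 2 * eps).
  { intros eps He. destruct (hv eps ltac:(lra)) as [N HN]. exists N. intros k Hk.
    assert (Hkj : forall j, (N <= j)%nat -> ml j = m -> D G (ml k, w k) (m, w j) < eps).
    { intros j Hj Hmj. specialize (HN k j Hk Hj). rewrite <- (Hmk k), <- (Hmk j) in HN.
      rewrite galg_D in HN. fold (ml k) (w k) (ml j) (w j) in HN. rewrite Hmj in HN. exact HN. }
    unfold u. destruct (Mlab_eq_dec (ml k) m) as [e|e].
    - split.
      + rewrite <- e. fold (w k). rewrite <- (Hmk k). fold (ml k) (w k).
        rewrite (pm_self _ Gp). lra.
      + intros j Hj Hmj. specialize (Hkj j Hj Hmj). rewrite e, D_same in Hkj by exact Gp. lra.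
    - destruct (Hm N) as [j0 [Hj0 Hmj0]].
      assert (Hk0 : forall j, (N <= j)%nat -> ml j = m ->
        exists k0, ml k <> k0 /\ m <> k0 /\
        D G (ml k, w k) (m, w j) = dist (w k) (corner G (ml k) k0) / 2 + dist (w j) (corner G m k0) / 2).
      { intros j Hj Hmj. pose proof (Hkj j Hj Hmj).
        destruct (D_small G Gp (ml k) m (w k) (w j)) as [[e1 _]|[k0 [h1 [h2 [h3 h4]]]]];
          [lra|congruence|]. eauto. }
      destruct (Hk0 j0 Hj0 Hmj0) as [k0 [h1 [h2 h3]]].
      assert (Ek0 : k0 = third m (ml k)) by (apply third_uniq; congruence).
      split.
      + rewrite <- (Hmk k). rewrite galg_D. fold (ml k) (w k). rewrite <- Ek0.
        eapply Rle_trans; [apply (D_le_junction G _ _ k0); cbn [fst snd]; auto|]. cbn [fst snd].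
        rewrite (pm_self _ Gp). specialize (Hkj j0 Hj0 Hmj0).
        pose proof (pm_nn _ Gp (w j0) (corner G m k0)). lra.
      + intros j Hj Hmj. destruct (Hk0 j Hj Hmj) as [k1 [g1 [g2 g3]]].
        assert (k1 = third m (ml k)) by (apply third_uniq; congruence). subst k1. rewrite <- Ek0 in g3 |- *.
        specialize (Hkj j Hj Hmj). rewrite (pm_sym _ Gp).
        pose proof (pm_nn _ Gp (w k) (corner G (ml k) k0)). lra. }
  assert (hu : cauchy u).
  { intros eps He. destruct (KE (Rmin (eps/5) (/4))) as [N HN].
    { split; [apply Rmin_glb_lt; lra|apply Rmin_r]. }
    pose proof (Rmin_l (eps/5) (/4)).
    destruct (Hm N) as [j [Hj Hmj]]. exists N. intros k l Hk Hl.
    destruct (HN k Hk) as [_ H1]. destruct (HN l Hl) as [_ H2].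
    specialize (H1 j Hj Hmj). specialize (H2 j Hj Hmj).
    pose proof (pm_tri _ Gp (u k) (w j) (u l)) as T1. rewrite (pm_sym _ Gp (w j) (u l)) in T1. lra. }
  exists (tens S m (clsS u hu)). rewrite PS0.
  rewrite <- (S_rep' y hv). apply clsS_eq.
  pose proof (cauchy_galg m _ hu) as hgu.
  pose proof (dS_tri _ (fun k => galg (tens G m (u k))) v
     (cauchy_galg m _ (mrepS_cauchy (clsS u hu))) hgu hv) as T.
  rewrite (PSD m m _ _ (mrepS_cauchy (clsS u hu)) hu), S_rep', D_self in T by exact S_pms.
  assert (Z : dS (fun k => galg (tens G m (u k))) v = 0).
  { pose proof (dS_cv _ _ hgu hv) as C. apply Rle_antisym; [|apply dS_nn; auto].
    apply Rnot_lt_le; intros Hlt.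
    set (eps := Rmin (dS (fun k => galg (tens G m (u k))) v / 2) (/4)).
    assert (He : 0 < eps <= /4) by (split; [apply Rmin_glb_lt; lra|apply Rmin_r]).
    pose proof (Rmin_l (dS (fun k => galg (tens G m (u k))) v / 2) (/4)).
    assert (dS (fun k => galg (tens G m (u k))) v <= eps).
    { apply (cv_le_ev _ _ _ C). destruct (KE eps He) as [N HN]. exists N. intros k Hk.
      apply HN; auto. }
    fold eps in H. lra. }
  pose proof (dS_nn _ _ (cauchy_galg m _ (mrepS_cauchy (clsS u hu))) hv). change (mrep y) with v. lra.
Qed.

Lemma psi_s y : psi (s y) = y.
Proof.
  unfold s. destruct (excluded_middle_informative _) as [h|n].
  - destruct (constructive_indefinite_description _ h) as [z' Hz']; simpl. auto.
  - exfalso; apply n, psi_surj.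
Qed.

Lemma tms_pms X : is_tms X -> pms X.
Proof.
  intros [[H1 [H2 [H3 H4]]] [H5 [_ [_ [_ [H6 [H7 H8]]]]]]].
  constructor; auto. intros x. apply H2. reflexivity.
Qed.

Lemma tms_metric X : is_tms X -> metric X.
Proof. intros [[_ [H2 _]] _] x y. apply H2. Qed.

Lemma Sp : pms S. Proof. exact S_pms. Qed.

Lemma half_pow_small eps : 0 < eps -> exists j, (/2)^j < eps.
Proof.
  intros He. destruct (pow_lt_1_zero (/2) ltac:(rewrite Rabs_pos_eq; lra) eps He) as [N HN].
  exists N. specialize (HN N (Nat.le_refl N)). rewrite Rabs_pos_eq in HN; auto.
  apply pow_le; lra.
Qed.

Lemma half_pow_mono i j : (i <= j)%nat -> (/2)^j <= (/2)^i.
Proof.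
  intros H. replace j with ((j - i) + i)%nat by lia. generalize (j - i)%nat as t. intros t.
  induction t.
  - simpl plus; lra.
  - change (Datatypes.S t + i)%nat with (Datatypes.S (t + i)). simpl pow.
    pose proof (pow_le (/2) (t + i) ltac:(lra)). lra.
Qed.

Lemma zero_of_small d : 0 <= d -> (forall j, d <= (/2)^j) -> d = 0.
Proof.
  intros H0 H. apply Rle_antisym; auto. apply Rnot_lt_le; intros Hd.
  destruct (half_pow_small d Hd) as [j Hj]. specialize (H j). lra.
Qed.

Lemma mrep_tens_outer X : pms X -> metric X -> forall m,
  mrep (tens X m (corner X m m)) = (m, corner X m m).
Proof.
  intros HX MX m. pose proof (mrep_tens X HX m (corner X m m)) as E.
  destruct (mrep (tens X m (corner X m m))) as [n y].
  destruct (D_zero X HX m n _ _ E) as [[-> e]|[k [h1 [h2 [h3 [e1 e2]]]]]].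
  - apply MX in e. subst. reflexivity.
  - rewrite (corner_dist X HX m m k h1) in e1. lra.
Qed.

Section Main.
Variable X : tms.
Variable e : X -> Ften X.
Hypothesis HXt : is_tms X.
Hypothesis He : morph X (Ften X) e.

Let HX := tms_pms X HXt.
Let MX := tms_metric X HXt.

Definition lab (x : X) : Mlab := fst (mrep (e x)).
Definition nxt (x : X) : X := snd (mrep (e x)).

Fixpoint fseq (k : nat) (x : X) : G :=
  match k with
  | O => pT G
  | Datatypes.S k' => galg (tens G (lab x) (fseq k' (nxt x)))
  end.

Lemma fseq_step k : forall x, dist (fseq (Datatypes.S k) x) (fseq k x) <= (/2)^k.
Proof.
  induction k; intros x.
  - simpl pow. apply (pm_le1 _ Gp).
  - change (dist (galg (tens G (lab x) (fseq (Datatypes.S k) (nxt x))))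
                 (galg (tens G (lab x) (fseq k (nxt x)))) <= (/2)^(Datatypes.S k)).
    rewrite galg_D, D_same by exact Gp. specialize (IHk (nxt x)). simpl pow. lra.
Qed.

Lemma fseq_close i t x : dist (fseq (t + i) x) (fseq i x) <= 2 * (/2)^i - 2 * (/2)^(t+i).
Proof.
  induction t.
  - simpl plus. rewrite (pm_self _ Gp). lra.
  - change (Datatypes.S t + i)%nat with (Datatypes.S (t + i)).
    pose proof (fseq_step (t+i) x). pose proof (pm_tri _ Gp (fseq (Datatypes.S (t+i)) x) (fseq (t+i) x) (fseq i x)).
    simpl pow. lra.
Qed.

Lemma fseq_cauchy x : cauchy (fun k => fseq k x).
Proof.
  intros eps Heps. destruct (half_pow_small (eps/2)) as [N HN]; [lra|]. exists N.
  assert (Hc : forall i j, (N <= i)%nat -> (i <= j)%nat -> dist (fseq j x) (fseq i x) < eps).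
  { intros i j Hi Hij. replace j with ((j - i) + i)%nat by lia.
    pose proof (fseq_close i (j-i) x). pose proof (pow_le (/2) (j - i + i) ltac:(lra)).
    assert ((/2)^i <= (/2)^N).
    { apply half_pow_mono; lia. }
    lra. }
  intros i j Hi Hj. destruct (Nat.le_ge_cases i j).
  - rewrite (pm_sym _ Gp). apply Hc; auto.
  - apply Hc; auto.
Qed.

Definition fS (x : X) : S := clsS (fun k => fseq k x) (fseq_cauchy x).

Lemma cv_zero_small (a : nat -> R) l : Un_cv a l -> (forall k, 0 <= a k) ->
  (forall k, a k <= (/2)^k) -> l = 0.
Proof.
  intros C H0 H1. apply zero_of_small.
  - apply (cv_ge_const a l 0 C H0).
  - intros j. apply (cv_le_ev a l _ C). exists j. intros k Hk. eapply Rle_trans; [apply H1|].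
    apply half_pow_mono; lia.
Qed.

Lemma fS_fix x : fS x = psi (tens S (lab x) (fS (nxt x))).
Proof.
  rewrite PS0. unfold fS. apply clsS_eq.
  set (sh := fun k => galg (tens G (lab x) (fseq k (nxt x)))).
  assert (hsh : cauchy sh) by (apply cauchy_galg, fseq_cauchy).
  pose proof (dS_tri (fun k => fseq k x) sh
    (fun k => galg (tens G (lab x) (mrep (clsS (fun k => fseq k (nxt x)) (fseq_cauchy (nxt x))) k)))
    (fseq_cauchy x) hsh (cauchy_galg _ _ (mrepS_cauchy _))) as T.
  assert (Z1 : dS sh (fun k => galg (tens G (lab x)
      (mrep (clsS (fun k => fseq k (nxt x)) (fseq_cauchy (nxt x))) k))) = 0).
  { unfold sh. rewrite (PSD _ _ _ _ (fseq_cauchy (nxt x)) (mrepS_cauchy _)).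
    rewrite S_rep'. apply D_self, Sp. }
  assert (Z2 : dS (fun k => fseq k x) sh = 0).
  { apply (cv_zero_small _ _ (dS_cv _ _ (fseq_cauchy x) hsh)).
    - intros; apply (pm_nn _ Gp).
    - intros k. rewrite (pm_sym _ Gp). apply (fseq_step k x). }
  pose proof (dS_nn _ _ (fseq_cauchy x) (cauchy_galg (lab x) _ (mrepS_cauchy
      (clsS (fun k => fseq k (nxt x)) (fseq_cauchy (nxt x)))))). lra.
Qed.

Lemma e_outer m : e (corner X m m) = tens X m (corner X m m).
Proof.
  destruct He as [_ T]. rewrite (trip_corner _ _ _ T). destruct m; reflexivity.
Qed.

Lemma fseq_outer m k : dist (fseq k (corner X m m)) (corner G m m) <= (/2)^k.
Proof.
  induction k.
  - simpl pow. apply (pm_le1 _ Gp).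
  - change (dist (galg (tens G (lab (corner X m m)) (fseq k (nxt (corner X m m)))))
                 (corner G m m) <= (/2)^(Datatypes.S k)).
    unfold lab, nxt. rewrite e_outer, mrep_tens_outer by auto. cbn [fst snd].
    rewrite <- (galg_corner m) at 1. rewrite galg_D, D_same by exact Gp. simpl pow. lra.
Qed.

Lemma fS_outer m : fS (corner X m m) = corner S m m.
Proof.
  rewrite cornerS. unfold fS. apply clsS_eq.
  apply (cv_zero_small _ _ (dS_cv _ _ (fseq_cauchy _) (const_cauchy _))).
  - intros; apply (pm_nn _ Gp).
  - intros k. apply fseq_outer.
Qed.

Lemma fS_trip : tripointed X S fS.
Proof.
  split; [|split].
  - exact (fS_outer ma). - exact (fS_outer mb). - exact (fS_outer mc).
Qed.

Lemma fS_dist x y : dist (fS x) (fS y) = D S (lab x, fS (nxt x)) (lab y, fS (nxt y)).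
Proof. rewrite (fS_fix x), (fS_fix y). apply PS. Qed.

Lemma e_dist x y : dist (e x) (e y) = D X (lab x, nxt x) (lab y, nxt y).
Proof. rewrite Ften_dist by exact HX. unfold lab, nxt. rewrite <- !surjective_pairing. reflexivity. Qed.

Definition gap (x c : X) : R := if Req_EM_T (dist x c) 0 then 1 else dist x c.

Lemma gap_pos x c : 0 < gap x c.
Proof.
  unfold gap. destruct (Req_EM_T _ _); [lra|]. pose proof (pm_nn _ HX x c). lra.
Qed.

Lemma fS_cont_level j : forall x, exists delta, 0 < delta /\
  forall y, dist x y < delta -> dist (fS x) (fS y) <= (/2)^j.
Proof.
  induction j; intros x.
  - exists 1. split; [lra|]. intros; simpl pow. apply (pm_le1 _ Sp).
  - destruct (IHj (nxt x)) as [d0 [Hd0 H0]].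
    destruct (IHj (pT X)) as [dT [HdT HT]].
    destruct (IHj (pL X)) as [dL [HdL HL]].
    destruct (IHj (pR X)) as [dR [HdR HR]].
    set (g := Rmin (gap (nxt x) (pT X)) (Rmin (gap (nxt x) (pL X)) (gap (nxt x) (pR X)))).
    assert (Hg : 0 < g) by (unfold g; repeat apply Rmin_glb_lt; apply gap_pos).
    assert (Hgc : forall c, (c = pT X \/ c = pL X \/ c = pR X) -> g <= gap (nxt x) c).
    { intros c [Hc|[Hc|Hc]]; subst c; unfold g.
      - apply Rmin_l.
      - eapply Rle_trans; [apply Rmin_r|apply Rmin_l].
      - eapply Rle_trans; [apply Rmin_r|apply Rmin_r]. }
    clearbody g.
    set (eps := Rmin (Rmin d0 (Rmin dT (Rmin dL dR))) (Rmin g 1) / 4).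
    assert (Heps : 0 < eps).
    { unfold eps. assert (0 < Rmin (Rmin d0 (Rmin dT (Rmin dL dR))) (Rmin g 1))
        by (repeat apply Rmin_glb_lt; lra). lra. }
    assert (E1 : 2 * eps <= d0 /\ 2 * eps <= dT /\ 2 * eps <= dL /\ 2 * eps <= dR /\
                 2 * eps < g /\ eps < /2).
    { unfold eps. pose proof (Rmin_l (Rmin d0 (Rmin dT (Rmin dL dR))) (Rmin g 1)).
      pose proof (Rmin_r (Rmin d0 (Rmin dT (Rmin dL dR))) (Rmin g 1)).
      pose proof (Rmin_l d0 (Rmin dT (Rmin dL dR))). pose proof (Rmin_r d0 (Rmin dT (Rmin dL dR))).
      pose proof (Rmin_l dT (Rmin dL dR)). pose proof (Rmin_r dT (Rmin dL dR)).
      pose proof (Rmin_l dL dR). pose proof (Rmin_r dL dR). pose proof (Rmin_l g 1).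
      pose proof (Rmin_r g 1). lra. }
    destruct E1 as [E0 [ET [EL [ER [Eg Eh]]]]].
    assert (Hc : forall n k y, dist (corner X n k) y < 2 * eps ->
               dist (fS (corner X n k)) (fS y) <= (/2)^j).
    { intros n k y Hy. destruct n, k; simpl corner in *;
        solve [apply HT; lra | apply HL; lra | apply HR; lra]. }
    assert (Hgap : forall n k, dist (nxt x) (corner X n k) < 2 * eps -> nxt x = corner X n k).
    { intros n k Hy. apply MX. apply NNPP; intros Hne.
      assert (g <= dist (nxt x) (corner X n k)).
      { 
        assert (Hcc : corner X n k = pT X \/ corner X n k = pL X \/ corner X n k = pR X)
          by (destruct n, k; simpl; auto).
        pose proof (Hgc _ Hcc). unfold gap in H. destruct (Req_EM_T _ _); [congruence|auto]. }
      lra. }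
    destruct He as [Ce _].
    destruct (Ce x eps Heps) as [de [Hde Hce]].
    exists de. split; auto. intros y Hy. specialize (Hce y Hy). rewrite e_dist in Hce.
    rewrite fS_dist. simpl pow.
    destruct (D_small X HX (lab x) (lab y) (nxt x) (nxt y) ltac:(lra)) as [[Em Ed]|[k [h1 [h2 [h3 h4]]]]].
    + rewrite <- Em. rewrite D_same by exact Sp.
      assert (dist (nxt x) (nxt y) < d0) by (pose proof (D_nn X HX (lab x, nxt x) (lab y, nxt y)); lra).
      specialize (H0 _ H). lra.
    + pose proof (pm_nn _ HX (nxt x) (corner X (lab x) k)).
      pose proof (pm_nn _ HX (nxt y) (corner X (lab y) k)).
      assert (Ex : nxt x = corner X (lab x) k) by (apply Hgap; lra).
      assert (Hy2 : dist (corner X (lab y) k) (nxt y) < 2 * eps) by (rewrite (pm_sym _ HX); lra).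
      specialize (Hc _ _ _ Hy2).
      eapply Rle_trans; [apply (D_le_junction S _ _ k); cbn [fst snd]; auto|]. cbn [fst snd].
      rewrite Ex. rewrite (trip_corner _ _ _ fS_trip) in *. rewrite (pm_self _ Sp).
      rewrite (pm_sym _ Sp). lra.
Qed.

Lemma fS_cont : continuous_map X S fS.
Proof.
  intros x eps Heps. destruct (half_pow_small eps Heps) as [j Hj].
  destruct (fS_cont_level j x) as [d [Hd H]]. exists d. split; auto.
  intros y Hy. specialize (H y Hy). lra.
Qed.

Lemma fS_eq x : s (fS x) = Fmap X S fS (e x).
Proof. rewrite fS_fix. rewrite s_psi. reflexivity. Qed.

Lemma fS_uniq (g : X -> S) : (forall x, s (g x) = Fmap X S g (e x)) -> fS = g.
Proof.
  intros Hg.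
  assert (Hfix : forall x, g x = psi (tens S (lab x) (g (nxt x)))).
  { intros x. rewrite <- (psi_s (g x)), Hg. reflexivity. }
  assert (Hb : forall j x, dist (fS x) (g x) <= (/2)^j).
  { induction j; intros x.
    - simpl pow. apply (pm_le1 _ Sp).
    - rewrite (fS_fix x), (Hfix x), PS, D_same by exact Sp. specialize (IHj (nxt x)).
      simpl pow. lra. }
  apply functional_extensionality; intros x. apply S_metric.
  apply zero_of_small; [apply (pm_nn _ Sp)|]. intros j; apply Hb.
Qed.
End Main.

Theorem mainTheorem9 :
  forall (X : tms) (e : car X -> car (Ften X)),
    is_tms X -> morph X (Ften X) e ->
    exists! f : car X -> car S,
      morph X S f /\ (forall x : car X, s (f x) = Fmap X S f (e x)).
Proof.
  intros X e HXt He. exists (fS X e). split.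
  - split; [split|].
    + apply fS_cont; auto.
    + apply fS_trip; auto.
    + apply fS_eq.
  - intros g [_ Hg]. apply fS_uniq; auto.
Qed.
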